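(* $\mathsf{ER}^2_2$ is provable in $\mathsf{ACA}_0$.
   Context: $\mathbb{Q}$ is a fixed primitive recursive presentation of the rationals with domain $\mathbb{N}$. For a coloring $f\colon[\mathbb{Q}]^2\to 2$, a set $H$ is $i$-homogeneous if $f(x,y)=i$ for all distinct $x,y\in H$. $\mathsf{ER}^2_2$ is the statement: for every coloring $f\colon[\mathbb{Q}]^2\to 2$ there exists either an infinite $0$-homogeneous set or a $1$-homogeneous set $H$ such that $(H,\leq_\mathbb{Q})$ is a dense linear order (understood non-trivially, so that such $H$ is infinite). $\mathsf{ACA}_0$ is $\mathsf{RCA}_0$ plus the arithmetical comprehension scheme. *)

(* Defs.v *)
(* Semantics of second-order arithmetic (Henkin / general
   models of the language L2), the theory ACA_0, and the statement ER^2_2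
   interpreted in such a model.  "ACA_0 proves phi" is rendered, via Goedel's
   completeness theorem, as "phi holds in every (Henkin) model of ACA_0". *)

Set Implicit Arguments.

Record L2Structure := {
  num : Type;
  sets : Type;
  mem : num -> sets -> Prop;
  zero : num;
  one : num;
  add : num -> num -> num;
  mul : num -> num -> num;
  lt : num -> num -> Prop
}.

(** * Syntax of L2 (de Bruijn indices; separate indices for number and set
    variables) *)
Inductive term : Type :=
  | tvar : nat -> term
  | tzero : term
  | tone : term
  | tadd : term -> term -> term
  | tmul : term -> term -> term.

Inductive form : Type :=
  | fEq : term -> term -> form
  | fLt : term -> term -> form
  | fMem : term -> nat -> form
  | fNot : form -> form
  | fAnd : form -> form -> form
  | fOr : form -> form -> form
  | fImp : form -> form -> form
  | fAllN : form -> form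
  | fExN : form -> form
  | fAllS : form -> form
  | fExS : form -> form.

Fixpoint arithmetical (f : form) : Prop :=
  match f with
  | fEq _ _ | fLt _ _ | fMem _ _ => True
  | fNot g | fAllN g | fExN g => arithmetical g
  | fAnd g h | fOr g h | fImp g h => arithmetical g /\ arithmetical h
  | fAllS _ | fExS _ => False
  end.

Definition scons {A : Type} (a : A) (e : nat -> A) : nat -> A :=
  fun i => match i with 0 => a | S j => e j end.

Fixpoint evalt (A : L2Structure) (en : nat -> num A) (t : term) : num A :=
  match t with
  | tvar i => en i
  | tzero => zero A
  | tone => one A
  | tadd t1 t2 => add A (evalt A en t1) (evalt A en t2)
  | tmul t1 t2 => mul A (evalt A en t1) (evalt A en t2)
  end.

Fixpoint sat (A : L2Structure) (en : nat -> num A) (es : nat -> sets A)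
    (f : form) : Prop :=
  match f with
  | fEq t1 t2 => evalt A en t1 = evalt A en t2
  | fLt t1 t2 => lt A (evalt A en t1) (evalt A en t2)
  | fMem t i => mem A (evalt A en t) (es i)
  | fNot g => ~ sat A en es g
  | fAnd g h => sat A en es g /\ sat A en es h
  | fOr g h => sat A en es g \/ sat A en es h
  | fImp g h => sat A en es g -> sat A en es h
  | fAllN g => forall m : num A, sat A (scons m en) es g
  | fExN g => exists m : num A, sat A (scons m en) es g
  | fAllS g => forall X : sets A, sat A en (scons X es) g
  | fExS g => exists X : sets A, sat A en (scons X es) g
  end.

(** * Models of ACA_0 (Simpson, SOSOA, I.2.4 and I.3) *)
Definition basic_axioms (A : L2Structure) : Prop :=
  let a := add A in let m := mul A in let o := one A in let z := zero A in
  (forall n : num A, a n o <> z) /\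
  (forall n k : num A, a n o = a k o -> n = k) /\
  (forall n : num A, a n z = n) /\
  (forall n k : num A, a n (a k o) = a (a n k) o) /\
  (forall n : num A, m n z = z) /\
  (forall n k : num A, m n (a k o) = a (m n k) n) /\
  (forall n : num A, ~ lt A n z) /\
  (forall n k : num A, lt A n (a k o) <-> (lt A n k \/ n = k)).

Definition induction_axiom (A : L2Structure) : Prop :=
  forall X : sets A,
    mem A (zero A) X ->
    (forall n, mem A n X -> mem A (add A n (one A)) X) ->
    forall n, mem A n X.

Definition arithmetical_comprehension (A : L2Structure) : Prop :=
  forall (phi : form), arithmetical phi ->
  forall (en : nat -> num A) (es : nat -> sets A),
  exists X : sets A, forall n : num A, mem A n X <-> sat A (scons n en) es phi.

Definition ACA0_model (A : L2Structure) : Prop :=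
  basic_axioms A /\ induction_axiom A /\ arithmetical_comprehension A.

(** * Notions used by ER^2_2, interpreted in a model (each is the
    interpretation of an explicit arithmetical L2 formula) *)
Section InModel.
Variable A : L2Structure.

Definition le_ (x y : num A) : Prop := lt A x y \/ x = y.
Definition succ (x : num A) : num A := add A x (one A).

(* Cantor pairing: z = <x,y>  iff  2z = (x+y)(x+y+1) + 2x *)
Definition pairRel (x y z : num A) : Prop :=
  add A z z = add A (mul A (add A x y) (succ (add A x y))) (add A x x).

Definition modRel (u q r : num A) : Prop :=
  lt A r q /\ exists k, u = add A (mul A q k) r.

Definition pow2 (p : num A) : Prop :=
  forall d, (exists e, mul A d e = p) -> d = one A \/ exists h, d = add A h h.

(* The fixed primitive recursive presentation of the rationals with domain N:
   n codes the dyadic rational in (0,1) whose binary digits after the point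
   are the binary digits of n+1 read from the least significant one.
   n <_Q m  iff  for some p = 2^j, n+1 = m+1 (mod p) and
   (n+1 mod 2p) < (m+1 mod 2p). *)
Definition ltQ (n m : num A) : Prop :=
  exists p, pow2 p /\
    (exists r, modRel (succ n) p r /\ modRel (succ m) p r) /\
    exists r1 r2, modRel (succ n) (add A p p) r1 /\
                  modRel (succ m) (add A p p) r2 /\ lt A r1 r2.

(* A coloring f : [Q]^2 -> 2 is coded by a set F: f({x,y}) = 1 iff
   <min(x,y), max(x,y)> \in F (min/max w.r.t. the order of N). *)
Definition color1 (F : sets A) (x y : num A) : Prop :=
  (lt A x y /\ exists z, pairRel x y z /\ mem A z F) \/
  (lt A y x /\ exists z, pairRel y x z /\ mem A z F).

Definition homogeneous (F H : sets A) (i : bool) : Prop :=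
  forall x y, mem A x H -> mem A y H -> x <> y ->
    (if i then color1 F x y else ~ color1 F x y).

Definition infinite_set (H : sets A) : Prop :=
  forall k, exists x, mem A x H /\ lt A k x.

(* (H, <=_Q) is a dense linear order (non-trivially, i.e. H infinite) *)
Definition denseQ (H : sets A) : Prop :=
  infinite_set H /\
  forall x y, mem A x H -> mem A y H -> ltQ x y ->
    exists z, mem A z H /\ ltQ x z /\ ltQ z y.

Definition ER22 : Prop :=
  forall F : sets A,
    (exists H, infinite_set H /\ homogeneous F H false) \/
    (exists H, homogeneous F H true /\ denseQ H).
End InModel.

(* Main.v *)
Require Import Defs.
From Stdlib Require Import List Ring Classical.
Import ListNotations.

Ltac find_idx x l :=
  lazymatch l with
  | x :: _ => constr:(O)
  | _ :: ?r => let i := find_idx x r in constr:(S i)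
  end.

Ltac reify_term A t nenv :=
  lazymatch t with
  | zero A => constr:((tzero, nenv))
  | one A => constr:((tone, nenv))
  | add A ?a ?b =>
      let ra := reify_term A a nenv in
      lazymatch ra with (?ta, ?n1) =>
      let rb := reify_term A b n1 in
      lazymatch rb with (?tb, ?n2) => constr:((tadd ta tb, n2)) end end
  | mul A ?a ?b =>
      let ra := reify_term A a nenv in
      lazymatch ra with (?ta, ?n1) =>
      let rb := reify_term A b n1 in
      lazymatch rb with (?tb, ?n2) => constr:((tmul ta tb, n2)) end end
  | _ => match constr:(tt) with
         | _ => let i := find_idx t nenv in constr:((tvar i, nenv))
         | _ => let n' := eval cbv [List.app] in (nenv ++ [t]) in
                 let i := find_idx t n' in constr:((tvar i, n'))
         end
  end.

Ltac find_or_add x l :=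
  match constr:(tt) with
  | _ => let i := find_idx x l in constr:((i, l))
  | _ => let l' := eval cbv [List.app] in (l ++ [x]) in
          let i := find_idx x l' in constr:((i, l'))
  end.

Ltac reify_prop A P nenv senv :=
  lazymatch P with
  | @eq (num A) ?a ?b =>
      let ra := reify_term A a nenv in
      lazymatch ra with (?ta, ?n1) =>
      let rb := reify_term A b n1 in
      lazymatch rb with (?tb, ?n2) => constr:((fEq ta tb, n2, senv)) end end
  | lt A ?a ?b =>
      let ra := reify_term A a nenv in
      lazymatch ra with (?ta, ?n1) =>
      let rb := reify_term A b n1 in
      lazymatch rb with (?tb, ?n2) => constr:((fLt ta tb, n2, senv)) end end
  | mem A ?a ?X =>
      let ra := reify_term A a nenv in
      lazymatch ra with (?ta, ?n1) =>
      let rs := find_or_add X senv in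
      lazymatch rs with (?i, ?s1) => constr:((fMem ta i, n1, s1)) end end
  | ~ ?Q =>
      let r := reify_prop A Q nenv senv in
      lazymatch r with (?p, ?n1, ?s1) => constr:((fNot p, n1, s1)) end
  | ?Q /\ ?R =>
      let r := reify_prop A Q nenv senv in
      lazymatch r with (?p, ?n1, ?s1) =>
      let r2 := reify_prop A R n1 s1 in
      lazymatch r2 with (?q, ?n2, ?s2) => constr:((fAnd p q, n2, s2)) end end
  | ?Q \/ ?R =>
      let r := reify_prop A Q nenv senv in
      lazymatch r with (?p, ?n1, ?s1) =>
      let r2 := reify_prop A R n1 s1 in
      lazymatch r2 with (?q, ?n2, ?s2) => constr:((fOr p q, n2, s2)) end end
  | exists x : num A, @?Q x =>
      let y := fresh "rv" in
      let r := constr:(fun y : num A => ltac:(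
                 let b := eval cbv beta in (Q y) in
                 let ne := constr:(y :: nenv) in
                 let r0 := reify_prop A b ne senv in
                 lazymatch r0 with (?p, _ :: ?n1, ?s1) => exact (p, n1, s1) end)) in
      lazymatch r with fun _ => (?p, ?n1, ?s1) => constr:((fExN p, n1, s1)) end
  | forall x : num A, @?Q x =>
      let y := fresh "rv" in
      let r := constr:(fun y : num A => ltac:(
                 let b := eval cbv beta in (Q y) in
                 let ne := constr:(y :: nenv) in
                 let r0 := reify_prop A b ne senv in
                 lazymatch r0 with (?p, _ :: ?n1, ?s1) => exact (p, n1, s1) end)) in
      lazymatch r with fun _ => (?p, ?n1, ?s1) => constr:((fAllN p, n1, s1)) end
  | ?Q -> False =>
      let r := reify_prop A Q nenv senv in
      lazymatch r with (?p, ?n1, ?s1) => constr:((fNot p, n1, s1)) end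
  | ?Q -> ?R =>
      let r := reify_prop A Q nenv senv in
      lazymatch r with (?p, ?n1, ?s1) =>
      let r2 := reify_prop A R n1 s1 in
      lazymatch r2 with (?q, ?n2, ?s2) => constr:((fImp p q, n2, s2)) end end
  | True => constr:((fEq tzero tzero, nenv, senv))
  | False => constr:((fNot (fEq tzero tzero), nenv, senv))
  end.

Definition lenv {T} (d : T) (l : list T) : nat -> T := fun i => nth i l d.


Lemma compr_lemma (A : L2Structure) (HC : arithmetical_comprehension A)
  (P : num A -> Prop) phi en es :
  arithmetical phi ->
  (forall n, sat A (scons n en) es phi -> P n) ->
  (forall n, P n -> sat A (scons n en) es phi) ->
  exists X, forall n, mem A n X <-> P n.
Proof.
  intros Ha H1 H2. destruct (HC phi Ha en es) as [X HX]. exists X.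
  intro n. rewrite HX. split; auto.
Qed.

Ltac comprehend_with A HC d P :=
  let Pb := eval cbv beta in (forall n : num A, P n) in
  let r := reify_prop A Pb (@nil (num A)) (@nil (sets A)) in
  lazymatch r with (fAllN ?phi, ?ne, ?se) =>
    refine (@compr_lemma A HC P phi (lenv (zero A) ne) (lenv d se) _ _ _);
    [ cbn; tauto | intros ? Hsat; exact Hsat | intros ? Hsat; exact Hsat ]
  end.


Section Dev.
Variable A : L2Structure.
Hypothesis HA : ACA0_model A.
Variable d0 : sets A.

Local Notation N := (num A).
Local Notation "x + y" := (add A x y).
Local Notation "x * y" := (mul A x y).
Local Notation "0" := (zero A).
Local Notation "1" := (one A).
Local Notation "x < y" := (lt A x y).
Local Notation "x ∈ X" := (mem A x X) (at level 70).

Lemma HC : arithmetical_comprehension A. Proof. apply HA. Qed.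
Lemma HI : induction_axiom A. Proof. apply HA. Qed.
Lemma HB : basic_axioms A. Proof. apply HA. Qed.

Definition dvd (d n : N) := exists e, d * e = n.
Definition cong (q u v : N) := exists r, modRel A u q r /\ modRel A v q r.

Ltac compr := lazymatch goal with
  |- exists X, forall n, mem A n X <-> @?P n =>
  let P' := eval cbv beta delta -[add mul zero one lt mem num sets not] in P in
  comprehend_with A HC d0 P' end.

Lemma mind_lemma (P : N -> Prop) :
  (exists X, forall n, n ∈ X <-> P n) -> P 0 -> (forall n, P n -> P (n + 1)) -> forall n, P n.
Proof.
  intros [X HX] H0 HS. assert (forall n, n ∈ X).
  { apply HI. apply HX; auto. intros n Hn. apply HX. apply HS. apply HX; auto. }
  intro n. apply HX. auto.
Qed.

Ltac mind := lazymatch goal with |- forall n : num A, @?P n =>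
  refine (mind_lemma P _ _ _); [ compr | cbv beta | cbv beta ] end.

Lemma a_S0 : forall n, n + 1 <> 0. Proof. apply HB. Qed.
Lemma a_Sinj : forall n k, n + 1 = k + 1 -> n = k. Proof. apply HB. Qed.
Lemma a_add0 : forall n, n + 0 = n. Proof. apply HB. Qed.
Lemma a_addS : forall n k, n + (k + 1) = (n + k) + 1. Proof. apply HB. Qed.
Lemma a_mul0 : forall n, n * 0 = 0. Proof. apply HB. Qed.
Lemma a_mulS : forall n k, n * (k + 1) = n * k + n. Proof. apply HB. Qed.
Lemma a_lt0 : forall n, ~ n < 0. Proof. apply HB. Qed.
Lemma a_ltS : forall n k, n < k + 1 <-> n < k \/ n = k. Proof. apply HB. Qed.

Lemma add0l : forall n, 0 + n = n.
Proof. mind. - apply a_add0. - intros n IH. rewrite a_addS, IH. reflexivity. Qed.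

Lemma addSl : forall n m, (m + 1) + n = (m + n) + 1.
Proof. intro n. pattern n. revert n. mind.
  - intro m. rewrite !a_add0. reflexivity.
  - intros n IH m. rewrite !a_addS, IH. reflexivity. Qed.

Lemma addC : forall n m, n + m = m + n.
Proof. intro n. pattern n. revert n. mind.
  - intro m. rewrite add0l, a_add0. reflexivity.
  - intros n IH m. rewrite addSl, a_addS, IH. reflexivity. Qed.

Lemma addA : forall c a b, (a + b) + c = a + (b + c).
Proof. mind.
  - intros. rewrite !a_add0. reflexivity.
  - intros c IH a b. rewrite !a_addS, IH. reflexivity. Qed.

Lemma mul0l : forall n, 0 * n = 0.
Proof. mind. - apply a_mul0. - intros n IH. rewrite a_mulS, IH, a_add0. reflexivity. Qed.

Lemma mulSl : forall n m, (m + 1) * n = m * n + n.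
Proof. mind.
  - intro m. rewrite !a_mul0, a_add0. reflexivity.
  - intros n IH m. rewrite !a_mulS, IH.
    rewrite !a_addS. f_equal. rewrite !addA. f_equal. apply addC. Qed.

Lemma mulC : forall n m, n * m = m * n.
Proof. mind.
  - intro m. rewrite mul0l, a_mul0. reflexivity.
  - intros n IH m. rewrite mulSl, a_mulS, IH. reflexivity. Qed.

Lemma mulDr : forall c a b, a * (b + c) = a * b + a * c.
Proof. mind.
  - intros. rewrite a_add0, a_mul0, a_add0. reflexivity.
  - intros c IH a b. rewrite a_addS, !a_mulS, IH, addA. reflexivity. Qed.

Lemma mulA : forall c a b, (a * b) * c = a * (b * c).
Proof. mind.
  - intros. rewrite !a_mul0. reflexivity.
  - intros c IH a b. rewrite !a_mulS, IH, mulDr. reflexivity. Qed.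

Lemma mul1l : forall n, 1 * n = n.
Proof. intro n. rewrite mulC. rewrite <- (add0l 1), a_mulS, a_mul0, add0l. reflexivity. Qed.

Lemma srt : semi_ring_theory 0 1 (add A) (mul A) (@eq N).
Proof. constructor.
  - apply add0l. - apply addC. - intros. symmetry. apply addA.
  - apply mul1l. - apply mul0l. - apply mulC. - intros. symmetry. apply mulA.
  - intros x y z. rewrite mulC, mulDr, (mulC z x), (mulC z y). reflexivity.
Qed.
Add Ring MR : srt.


Lemma zero_or_succ : forall n, n = 0 \/ exists k, n = k + 1.
Proof. mind. - left; reflexivity. - intros n _. right. exists n. reflexivity. Qed.

Lemma add_cancel : forall c a b, a + c = b + c -> a = b.
Proof. mind.
  - intros a b. rewrite !a_add0. auto.
  - intros c IH a b H. apply IH. apply a_Sinj. rewrite <- !a_addS. exact H. Qed.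

Lemma add_cancel_l : forall c a b, c + a = c + b -> a = b.
Proof. intros c a b H. apply (add_cancel c). rewrite (addC a), (addC b). exact H. Qed.

Lemma add_eq_self : forall a d, a + d = a -> d = 0.
Proof. intros a d H. apply (add_cancel_l a). rewrite a_add0. exact H. Qed.

Lemma add_eq0 : forall a b, a + b = 0 -> a = 0 /\ b = 0.
Proof. intros a b H. destruct (zero_or_succ b) as [->|[k ->]].
  - rewrite a_add0 in H. auto.
  - rewrite a_addS in H. exfalso. exact (a_S0 _ H). Qed.

Lemma lt_ex : forall y x, x < y -> exists d, x + (d + 1) = y.
Proof. mind.
  - intros x H. exfalso. exact (a_lt0 _ H).
  - intros y IH x H. apply a_ltS in H. destruct H as [H|H].
    + destruct (IH x H) as [d Hd]. exists (d + 1). rewrite <- Hd. ring.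
    + subst. exists 0. ring. Qed.

Lemma ltS_l : forall x y, x < y -> x < y + 1.
Proof. intros x y H. apply (proj2 (a_ltS x y)). auto. Qed.
Lemma ltS_r : forall x, x < x + 1.
Proof. intros x. apply (proj2 (a_ltS x x)). auto. Qed.

Lemma ex_lt : forall d x, x < x + (d + 1).
Proof. mind.
  - intros x. rewrite add0l. apply ltS_r.
  - intros d IH x. rewrite (a_addS x (d + 1)). apply ltS_l. apply IH. Qed.

Lemma lt_iff : forall x y, x < y <-> exists d, x + (d + 1) = y.
Proof. intros x y. split.
  - apply lt_ex.
  - intros [d <-]. apply ex_lt. Qed.

Lemma lt_irr : forall x, ~ x < x.
Proof. intros x H. apply lt_iff in H. destruct H as [d Hd].
  apply add_eq_self in Hd. exact (a_S0 _ Hd). Qed.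

Lemma lt_trans : forall x y z, x < y -> y < z -> x < z.
Proof. intros x y z H1 H2. apply lt_iff in H1. apply lt_iff in H2. apply lt_iff.
  destruct H1 as [d1 <-]. destruct H2 as [d2 <-]. exists (d1 + d2 + 1). ring. Qed.

Lemma lt_asym : forall x y, x < y -> ~ y < x.
Proof. intros x y H1 H2. exact (lt_irr x (lt_trans _ _ _ H1 H2)). Qed.

Lemma lt_ne : forall x y, x < y -> x <> y.
Proof. intros x y H ->. exact (lt_irr _ H). Qed.

Lemma trich0 : forall y x, (exists d, x + d = y) \/ (exists d, y + (d + 1) = x).
Proof. mind.
  - intros x. destruct (zero_or_succ x) as [->|[k ->]].
    + left. exists 0. ring.
    + right. exists k. ring.
  - intros y IH x. destruct (IH x) as [[d Hd]|[d Hd]].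
    + left. exists (d + 1). rewrite <- Hd. ring.
    + destruct (zero_or_succ d) as [->|[e ->]].
      * left. exists 0. rewrite <- Hd. ring.
      * right. exists e. rewrite <- Hd. ring. Qed.

Lemma trich : forall x y, x < y \/ x = y \/ y < x.
Proof. intros x y. destruct (trich0 y x) as [[d Hd]|[d Hd]].
  - destruct (zero_or_succ d) as [->|[e ->]].
    + right; left. rewrite <- Hd. ring.
    + left. apply lt_iff. exists e. exact Hd.
  - right; right. apply lt_iff. exists d. exact Hd. Qed.

Definition le (x y : N) := x < y \/ x = y.
Local Notation "x <= y" := (le x y).

Lemma le_iff : forall x y, x <= y <-> exists d, x + d = y.
Proof. intros x y. split.
  - intros [H| ->]. + apply lt_iff in H. destruct H as [d Hd]. exists (d+1). exact Hd.
    + exists 0. ring.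
  - intros [d Hd]. destruct (zero_or_succ d) as [->|[e ->]].
    + right. rewrite <- Hd. ring.
    + left. apply lt_iff. exists e. exact Hd. Qed.

Lemma le_refl : forall x, x <= x. Proof. intros; right; reflexivity. Qed.
Lemma le_trans : forall x y z, x <= y -> y <= z -> x <= z.
Proof. intros x y z [H1| ->] [H2| ->]; try (left; eauto using lt_trans; fail); auto using le_refl.
  all: left; auto. Qed.
Lemma lt_le_trans : forall x y z, x < y -> y <= z -> x < z.
Proof. intros x y z H [H2| ->]; eauto using lt_trans. Qed.
Lemma le_lt_trans : forall x y z, x <= y -> y < z -> x < z.
Proof. intros x y z [H| ->] H2; eauto using lt_trans. Qed.
Lemma lt_le : forall x y, x < y -> x <= y. Proof. intros; left; auto. Qed.
Lemma not_lt_le : forall x y, ~ x < y -> y <= x.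
Proof. intros x y H. destruct (trich x y) as [h|[h|h]]. contradiction. right; auto. left; auto. Qed.
Lemma le_not_lt : forall x y, x <= y -> ~ y < x.
Proof. intros x y [H| ->] H2. exact (lt_asym _ _ H H2). exact (lt_irr _ H2). Qed.
Lemma le_antisym : forall x y, x <= y -> y <= x -> x = y.
Proof. intros x y [H| ->] H2; auto. exfalso. exact (le_not_lt _ _ H2 H). Qed.
Lemma le0 : forall x, 0 <= x. Proof. intros x. apply le_iff. exists x. ring. Qed.
Lemma lt_succ : forall x y, x < y + 1 <-> x <= y.
Proof. intros x y. apply a_ltS. Qed.
Lemma lt_succ_le : forall x y, x < y <-> x + 1 <= y.
Proof. intros x y. rewrite lt_iff, le_iff. split; intros [d Hd]; exists d; rewrite <- Hd; ring. Qed.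
Lemma lt0S : forall x, 0 < x + 1. Proof. intros x. apply lt_succ. apply le0. Qed.
Lemma ne0_lt : forall x, x <> 0 -> 0 < x.
Proof. intros x H. destruct (zero_or_succ x) as [->|[k ->]]. contradiction. apply lt0S. Qed.

Lemma lt_add_r : forall a b c, a < b -> a + c < b + c.
Proof. intros a b c H. apply lt_iff in H. apply lt_iff. destruct H as [d <-]. exists d. ring. Qed.
Lemma le_add_r : forall a b c, a <= b -> a + c <= b + c.
Proof. intros a b c H. apply le_iff in H. apply le_iff. destruct H as [d <-]. exists d. ring. Qed.
Lemma lt_add_cancel : forall a b c, a + c < b + c -> a < b.
Proof. intros a b c H. destruct (trich a b) as [h|[<-|h]]; auto.
  exfalso; exact (lt_irr _ H). exfalso. exact (lt_asym _ _ H (lt_add_r _ _ c h)). Qed.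
Lemma le_add_cancel : forall a b c, a + c <= b + c -> a <= b.
Proof. intros a b c [H|H]. left. eapply lt_add_cancel; eauto. right. eapply add_cancel; eauto. Qed.
Lemma le_add_l : forall a b, a <= a + b. Proof. intros a b. apply le_iff. exists b. reflexivity. Qed.
Lemma le_add_l' : forall a b, a <= b + a. Proof. intros a b. apply le_iff. exists b. ring. Qed.

Lemma lt_mul_r : forall a b c, a < b -> 0 < c -> a * c < b * c.
Proof. intros a b c H Hc. apply lt_iff in H. apply lt_iff in Hc. destruct H as [d <-].
  destruct Hc as [e <-]. apply lt_iff. exists (d * e + d + e). ring. Qed.
Lemma le_mul_r : forall a b c, a <= b -> a * c <= b * c.
Proof. intros a b c H. apply le_iff in H. apply le_iff. destruct H as [d <-]. exists (d * c). ring. Qed.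
Lemma mul_cancel : forall a b c, 0 < c -> a * c = b * c -> a = b.
Proof. intros a b c Hc H. destruct (trich a b) as [h|[h|h]]; auto.
  - exfalso. apply (lt_ne _ _ (lt_mul_r _ _ _ h Hc)). exact H.
  - exfalso. apply (lt_ne _ _ (lt_mul_r _ _ _ h Hc)). auto. Qed.
Lemma lt_mul_cancel : forall a b c, a * c < b * c -> a < b.
Proof. intros a b c H. destruct (trich a b) as [h|[<-|h]]; auto.
  exfalso; exact (lt_irr _ H). exfalso. apply (le_not_lt _ _ (le_mul_r _ _ c (lt_le _ _ h)) H). Qed.
Lemma mul_eq0 : forall a b, a * b = 0 -> a = 0 \/ b = 0.
Proof. intros a b H. destruct (zero_or_succ a) as [->|[k ->]]; auto.
  destruct (zero_or_succ b) as [->|[l ->]]; auto. exfalso.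
  assert (k * l + k + l + 1 = 0) as H' by (rewrite <- H; ring). exact (a_S0 _ H'). Qed.
Lemma mul_eq1 : forall a b, a * b = 1 -> a = 1.
Proof. intros a b H. destruct (zero_or_succ a) as [->|[k ->]].
  - rewrite mul0l in H. exfalso. apply (a_S0 0). rewrite add0l. auto.
  - destruct (zero_or_succ b) as [->|[l ->]].
    + rewrite a_mul0 in H. exfalso. apply (a_S0 0). rewrite add0l. auto.
    + destruct (zero_or_succ k) as [->|[m ->]]. ring.
      exfalso. assert (E : (m + 1 + 1) * (l + 1) = (m * l + m + l + l) + 1 + 1) by ring.
      rewrite H in E. assert (E2 : 0 + 1 = (m * l + m + l + l) + 1 + 1) by (rewrite add0l; exact E).
      apply a_Sinj in E2. symmetry in E2. exact (a_S0 _ E2). Qed.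
Lemma le_mul_pos : forall a b, 0 < b -> a <= a * b.
Proof. intros a b H. apply lt_iff in H. destruct H as [d <-]. apply le_iff. exists (a * d). ring. Qed.
Lemma lt_01 : 0 < 1. Proof. rewrite <- (add0l 1). apply lt0S. Qed.

Lemma lnp_set : forall X, (exists n, n ∈ X) -> exists n, n ∈ X /\ forall m, m < n -> ~ m ∈ X.
Proof. intros X [n0 Hn0]. apply NNPP. intro Hno.
  assert (forall n m, m < n -> ~ m ∈ X) as K.
  { mind.
    - intros m H. exfalso. exact (a_lt0 _ H).
    - intros n IH m Hm. apply lt_succ in Hm. destruct Hm as [Hm| ->]. auto.
      intro Hx. apply Hno. exists n. auto. }
  exact (K (n0 + 1) n0 (ltS_r n0) Hn0). Qed.

Lemma lnp (P : N -> Prop) : (exists X, forall n, n ∈ X <-> P n) ->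
  (exists n, P n) -> exists n, P n /\ forall m, m < n -> ~ P m.
Proof. intros [X HX] [n Hn]. destruct (lnp_set X) as [m [Hm1 Hm2]].
  exists n. apply HX; auto. exists m. split. apply HX; auto. intros k Hk Hp. apply (Hm2 k Hk). apply HX; auto. Qed.

Tactic Notation "least" constr(P) constr(H) "as" simple_intropattern(pat) :=
  destruct (lnp P ltac:(compr) H) as pat.

Lemma sind (P : N -> Prop) : (exists X, forall n, n ∈ X <-> P n) ->
  (forall n, (forall m, m < n -> P m) -> P n) -> forall n, P n.
Proof. intros [X HX] H n. apply NNPP. intro Hn.
  destruct (lnp (fun n => ~ n ∈ X)) as [m [Hm1 Hm2]].
  - compr.
  - exists n. rewrite HX. auto.
  - apply Hm1. apply HX. apply H. intros k Hk. apply NNPP. intro Hk'. apply (Hm2 k Hk). rewrite HX. auto. Qed.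

Ltac sind := lazymatch goal with |- forall n : num A, @?P n =>
  refine (sind P _ _); [ compr | cbv beta ] end.

Lemma divmod_ex : forall q, 0 < q -> forall u, exists k r, r < q /\ u = q * k + r.
Proof. intros q Hq. mind.
  - exists 0, 0. split; auto. ring.
  - intros u [k [r [Hr ->]]]. apply lt_succ_le in Hr. destruct Hr as [Hr|Hr].
    + exists k, (r + 1). split; auto. ring.
    + exists (k + 1), 0. split; auto. rewrite <- Hr. ring. Qed.

Lemma divmod_uniq : forall q k r k' r', r < q -> r' < q -> q * k + r = q * k' + r' -> k = k' /\ r = r'.
Proof.
  assert (forall q k r k' r', r < q -> r' < q -> q * k + r = q * k' + r' -> ~ k < k') as K.
  { intros q k r k' r' Hr Hr' E Hk. apply lt_succ_le in Hk. apply le_iff in Hk. destruct Hk as [d <-].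
    assert (q * k + r < q * k + r) as C.
    { rewrite E at 2. apply lt_le_trans with (q * k + q).
      - rewrite (addC (q * k) r), (addC (q * k) q). apply lt_add_r. exact Hr.
      - apply le_iff. exists (q * d + r'). ring. }
    exact (lt_irr _ C). }
  intros q k r k' r' Hr Hr' E. destruct (trich k k') as [h|[<-|h]].
  - exfalso. exact (K q k r k' r' Hr Hr' E h).
  - split; auto. eapply add_cancel_l; exact E.
  - exfalso. exact (K q k' r' k r Hr' Hr (eq_sym E) h). Qed.

Lemma lt1 : forall x, x < 1 -> x = 0.
Proof. intros x H. rewrite <- (add0l 1) in H. apply lt_succ in H. destruct H as [H|H]; auto.
  exfalso; exact (a_lt0 _ H). Qed.

Lemma lt2 : forall x, x < 1 + 1 -> x = 0 \/ x = 1.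
Proof. intros x H. apply lt_succ in H. destruct H as [H|H]; auto. left. apply lt1; auto. Qed.

Definition two := 1 + 1.
Lemma lt02 : 0 < two. Proof. unfold two. apply lt0S. Qed.

Lemma parity : forall n, (exists h, n = h + h) \/ (exists h, n = h + h + 1).
Proof. intro n. destruct (divmod_ex two lt02 n) as [k [r [Hr ->]]]. unfold two in *.
  destruct (lt2 r Hr) as [->| ->]. left. exists k. ring. right. exists k. ring. Qed.

Lemma parity_excl : forall h k, h + h <> k + k + 1.
Proof. intros h k E. assert (two * h + 0 = two * k + 1) as E' by (unfold two; transitivity (h + h); [ring | rewrite E; ring]).
  apply divmod_uniq in E'; unfold two. destruct E' as [_ E']. apply (a_S0 0). rewrite add0l. auto.
  apply lt0S. apply ltS_r. Qed.

Lemma mod_ex : forall u q, 0 < q -> exists r, modRel A u q r.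
Proof. intros u q Hq. destruct (divmod_ex q Hq u) as [k [r [Hr E]]]. exists r. split; auto. exists k; auto. Qed.
Lemma mod_uniq : forall u q r r', modRel A u q r -> modRel A u q r' -> r = r'.
Proof. intros u q r r' [H1 [k E1]] [H2 [k' E2]]. rewrite E1 in E2.
  apply divmod_uniq in E2; auto. apply E2. Qed.
Lemma mod_le : forall u q r, modRel A u q r -> r <= u.
Proof. intros u q r [_ [k ->]]. apply le_iff. exists (q * k). ring. Qed.
Lemma mod_lt : forall u q r, modRel A u q r -> r < q.
Proof. intros u q r [H _]; auto. Qed.
Lemma mod_small : forall u q, u < q -> modRel A u q u.
Proof. intros u q H. split; auto. exists 0. ring. Qed.
Lemma mod1 : forall u, modRel A u 1 0.
Proof. intros u. split. apply lt_01. exists u. ring. Qed.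
Lemma mod_addm : forall u q r D, dvd q D -> modRel A u q r -> modRel A (u + D) q r.
Proof. intros u q r D [e <-] [H [k ->]]. split; auto. exists (k + e). ring. Qed.

Lemma cong_refl : forall q u, 0 < q -> cong q u u.
Proof. intros q u Hq. destruct (mod_ex u q Hq) as [r Hr]. exists r; auto. Qed.
Lemma cong_sym : forall q u v, cong q u v -> cong q v u.
Proof. intros q u v [r [H1 H2]]. exists r; auto. Qed.
Lemma cong_trans : forall q u v w, cong q u v -> cong q v w -> cong q u w.
Proof. intros q u v w [r [H1 H2]] [r' [H3 H4]]. rewrite (mod_uniq _ _ _ _ H2 H3) in H1.
  exists r'; auto. Qed.
Lemma cong_div : forall d q u v, 0 < d -> dvd d q -> cong q u v -> cong d u v.
Proof. intros d q u v Hd [e <-] [r [[H1 [k1 E1]] [H2 [k2 E2]]]].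
  destruct (mod_ex r d Hd) as [s [Hs [j Ej]]]. exists s. split; split; auto.
  exists (e * k1 + j). rewrite E1, Ej. ring. exists (e * k2 + j). rewrite E2, Ej. ring. Qed.
Lemma cong_mod : forall q u v r, cong q u v -> modRel A u q r -> modRel A v q r.
Proof. intros q u v r [r' [H1 H2]] H. rewrite (mod_uniq _ _ _ _ H H1). auto. Qed.

Lemma mod_double : forall u p r2 s, 0 < p -> modRel A u (p + p) r2 -> modRel A u p s ->
  r2 = s \/ r2 = s + p.
Proof. intros u p r2 s Hp [Hr2 [k Ek]] Hs.
  destruct (trich r2 p) as [h|[h|h]].
  - left. apply (mod_uniq u p). split; auto. exists (k + k). rewrite Ek. ring. auto.
  - right. subst r2. assert (s = 0) as ->.
    { apply (mod_uniq u p). auto. split; auto. exists (k + k + 1). rewrite Ek. ring. }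
    ring.
  - right. apply lt_iff in h. destruct h as [t Et]. subst r2.
    assert (s = t + 1 + 0) as ->; [|ring].
    apply (mod_uniq u p). auto. split.
    + rewrite a_add0. apply (lt_add_cancel _ _ p). rewrite (addC p (t + 1)) in Hr2. exact Hr2.
    + exists (k + k + 1). rewrite Ek. ring. Qed.

Lemma lowbit : forall p u v r1 r2 s, 0 < p -> cong p u v -> modRel A u (p + p) r1 ->
  modRel A v (p + p) r2 -> modRel A u p s -> r1 < r2 -> r1 = s /\ r2 = s + p.
Proof. intros p u v r1 r2 s Hp Hc H1 H2 Hs Hlt.
  assert (modRel A v p s) as Hs' by (eapply cong_mod; eauto).
  destruct (mod_double u p r1 s Hp H1 Hs) as [->| ->];
  destruct (mod_double v p r2 s Hp H2 Hs') as [->| ->].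
  - exfalso; exact (lt_irr _ Hlt).
  - auto.
  - exfalso; apply (lt_asym _ _ Hlt). rewrite <- (a_add0 s) at 1. rewrite (addC s 0), (addC s p).
    apply lt_add_r. auto.
  - exfalso; exact (lt_irr _ Hlt). Qed.

Lemma dvd_trans : forall a b c, dvd a b -> dvd b c -> dvd a c.
Proof. intros a b c [e <-] [f <-]. exists (e * f). ring. Qed.
Lemma dvd_refl : forall a, dvd a a. Proof. intros a. exists 1. ring. Qed.
Lemma dvd_double : forall a, dvd a (a + a). Proof. intros a. exists two. unfold two. ring. Qed.

Lemma pow2_1 : pow2 A 1.
Proof. intros d [e E]. left. eapply mul_eq1; eauto. Qed.

Lemma three_ne1 : 1 + 1 + 1 <> 1.
Proof. intro E. assert (1 + 1 = 0) as E2.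
  { apply a_Sinj. rewrite E. rewrite add0l. reflexivity. }
  exact (a_S0 _ E2). Qed.

Lemma pow2_pos : forall p, pow2 A p -> 0 < p.
Proof. intros p H. apply ne0_lt. intros ->. destruct (H (1 + 1 + 1)) as [E|[h E]].
  - exists 0. apply a_mul0.
  - exact (three_ne1 E).
  - apply (parity_excl h 1). rewrite <- E. reflexivity. Qed.

Lemma pow2_double : forall p, pow2 A p -> pow2 A (p + p).
Proof. intros p H d [e E]. destruct (parity d) as [[h ->]|[h ->]].
  - right. exists h; auto.
  - destruct (parity e) as [[f ->]|[f ->]].
    + apply H. exists f. apply (mul_cancel _ _ two lt02). unfold two.
      transitivity ((h + h + 1) * (f + f)); [ring | rewrite E; ring].
    + exfalso. apply (parity_excl p (h * f + h * f + h + f)). rewrite <- E. ring. Qed.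

Lemma pow2_half : forall p, pow2 A p -> p = 1 \/ exists q, pow2 A q /\ p = q + q.
Proof. intros p H. destruct (H p) as [E|[h E]].
  - exists 1. ring.
  - left; auto.
  - right. exists h. split; auto. intros d [e Ed]. apply H. exists (e + e). rewrite E, <- Ed. ring. Qed.

Lemma le1_pos : forall p, 0 < p -> p <= 1 -> p = 1.
Proof. intros p H [H1|H1]; auto. apply lt1 in H1. subst. exfalso; exact (lt_irr _ H). Qed.

Lemma lt_double : forall q, 0 < q -> q < q + q.
Proof. intros q H. rewrite <- (add0l q) at 1. apply lt_add_r. auto. Qed.

Lemma lt_add_both : forall a b c d, a < b -> c < d -> a + c < b + d.
Proof. intros a b c d H1 H2. apply lt_trans with (b + c). apply lt_add_r; auto.
  rewrite (addC b c), (addC b d). apply lt_add_r; auto. Qed.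

Lemma pow2_cmp : forall q p, pow2 A p -> pow2 A q -> p <= q -> dvd p q.
Proof. sind. intros q IH p Hp Hq Hle.
  destruct (pow2_half q Hq) as [->|[q' [Hq' ->]]].
  - rewrite (le1_pos p (pow2_pos p Hp) Hle). apply dvd_refl.
  - destruct (pow2_half p Hp) as [->|[p' [Hp' ->]]].
    + exists (q' + q'). ring.
    + assert (p' <= q') as Hle'.
      { apply not_lt_le. intro C. apply (le_not_lt _ _ Hle). apply lt_add_both; auto. }
      destruct (IH q' (lt_double q' (pow2_pos q' Hq')) p' Hp' Hq' Hle') as [e <-].
      exists e. ring. Qed.

Lemma pow2_lt_dvd2 : forall p q, pow2 A p -> pow2 A q -> p < q -> dvd (p + p) q.
Proof. intros p q Hp Hq Hlt. apply pow2_cmp; auto. apply pow2_double; auto.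
  destruct (pow2_cmp q p Hp Hq (lt_le _ _ Hlt)) as [k <-].
  destruct (zero_or_succ k) as [->|[j ->]].
  - rewrite a_mul0 in Hlt. exfalso. apply (a_lt0 _ Hlt).
  - destruct (zero_or_succ j) as [->|[i ->]].
    + exfalso. apply (lt_irr p). rewrite (add0l 1), (mulC p 1), mul1l in Hlt. auto.
    + apply le_iff. exists (p * i). ring. Qed.

Lemma pow2_above : forall x, exists p, pow2 A p /\ x < p.
Proof. mind.
  - exists 1. split. apply pow2_1. apply lt_01.
  - intros x [p [Hp Hx]]. exists (p + p). split. apply pow2_double; auto.
    apply lt_succ_le in Hx. apply le_lt_trans with p; auto. apply lt_double. apply pow2_pos; auto. Qed.

Local Notation ltq := (ltQ A).

Lemma ltQ_irr : forall n, ~ ltq n n.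
Proof. intros n [p [Hp [_ [r1 [r2 [H1 [H2 H3]]]]]]].
  rewrite (mod_uniq _ _ _ _ H1 H2) in H3. exact (lt_irr _ H3). Qed.

Lemma pp_pos : forall p, pow2 A p -> 0 < p + p.
Proof. intros p H. apply lt_trans with p. apply pow2_pos; auto. apply lt_double, pow2_pos; auto. Qed.

Lemma ltQ_trans : forall n m k, ltq n m -> ltq m k -> ltq n k.
Proof. intros n m k [p [Hp [Hc1 [r1 [r2 [H1 [H2 H3]]]]]]] [q [Hq [Hc2 [t1 [t2 [G1 [G2 G3]]]]]]].
  assert (Hp0 := pow2_pos p Hp). assert (Hq0 := pow2_pos q Hq).
  destruct (trich p q) as [h|[<-|h]].
  -
    assert (dvd (p + p) q) as D by (apply pow2_lt_dvd2; auto).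
    assert (cong (p + p) (m + 1) (k + 1)) as C by (eapply cong_div; eauto using pp_pos).
    exists p. split; auto. split.
    + eapply cong_trans; eauto. eapply cong_div; eauto. apply dvd_double.
    + exists r1, r2. split; [exact H1| split; [eapply cong_mod; [exact C| exact H2] | exact H3]].
  - exfalso. destruct (mod_ex (n + 1) p Hp0) as [s Hs].
    destruct (lowbit p _ _ _ _ _ Hp0 Hc1 H1 H2 Hs H3) as [_ E2].
    assert (modRel A (m + 1) p s) as Hs' by (eapply cong_mod; eauto).
    destruct (lowbit p _ _ _ _ _ Hp0 Hc2 G1 G2 Hs' G3) as [E1 _].
    rewrite (mod_uniq _ _ _ _ H2 G1), E1 in E2.
    apply (lt_irr s). rewrite E2 at 2. rewrite (addC s p). rewrite <- (add0l s) at 1. apply lt_add_r; auto.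
  - assert (dvd (q + q) p) as D by (apply pow2_lt_dvd2; auto).
    assert (cong (q + q) (n + 1) (m + 1)) as C by (eapply cong_div; eauto using pp_pos).
    exists q. split; auto. split.
    + eapply cong_trans; eauto. eapply cong_div; eauto. apply dvd_double.
    + exists t1, t2. split; [eapply cong_mod; [exact (cong_sym _ _ _ C)| exact G1] | split; [exact G2 | exact G3]]. Qed.

Lemma ltQ_total : forall n m, n <> m -> ltq n m \/ ltq m n.
Proof. intros n m Hnm.
  destruct (pow2_above (n + 1 + (m + 1))) as [P [HP HPx]].
  assert (exists p, pow2 A p /\ ~ cong (p + p) (n + 1) (m + 1)) as Hex.
  { exists P. split; auto. intros [r [H1 H2]]. apply Hnm. apply a_Sinj.
    assert (n + 1 < P + P) as L1.
    { apply lt_trans with P; [|apply lt_double, pow2_pos; auto].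
      eapply le_lt_trans; [|exact HPx]. apply le_add_l. }
    assert (m + 1 < P + P) as L2.
    { apply lt_trans with P; [|apply lt_double, pow2_pos; auto].
      eapply le_lt_trans; [|exact HPx]. apply le_add_l'. }
    pose proof (mod_uniq _ _ _ _ (mod_small _ _ L1) H1) as E1.
    pose proof (mod_uniq _ _ _ _ (mod_small _ _ L2) H2) as E2. rewrite E1, E2. reflexivity. }
  least (fun p => pow2 A p /\ ~ cong (p + p) (n + 1) (m + 1)) Hex as [p [[Hp Hnc] Hmin]].
  assert (cong p (n + 1) (m + 1)) as Hc.
  { destruct (pow2_half p Hp) as [->|[q [Hq ->]]].
    - exists 0. split; apply mod1.
    - apply NNPP. intro C. apply (Hmin q). apply lt_double, pow2_pos; auto. auto. }
  assert (Hp0 := pp_pos p Hp).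
  destruct (mod_ex (n + 1) (p + p) Hp0) as [r1 H1].
  destruct (mod_ex (m + 1) (p + p) Hp0) as [r2 H2].
  destruct (trich r1 r2) as [h|[<-|h]].
  - left. exists p. split; auto. split; auto. exists r1, r2. auto.
  - exfalso. apply Hnc. exists r1; auto.
  - right. exists p. split; auto. split. apply cong_sym; auto. exists r2, r1. auto. Qed.

Lemma ltQ_dense : forall n m, ltq n m -> exists z, ltq n z /\ ltq z m.
Proof. intros n m [p [Hp [Hc [r1 [r2 [H1 [H2 H3]]]]]]].
  assert (Hp0 := pow2_pos p Hp).
  destruct (pow2_above (n + 1 + (m + 1))) as [D [HD HDx]].
  assert (HD0 := pow2_pos D HD).
  assert (n + 1 < D) as L1 by (eapply le_lt_trans; [|exact HDx]; apply le_add_l).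
  assert (m + 1 < D) as L2 by (eapply le_lt_trans; [|exact HDx]; apply le_add_l').
  destruct (mod_ex (n + 1) p Hp0) as [s Hs].
  destruct (lowbit p _ _ _ _ _ Hp0 Hc H1 H2 Hs H3) as [E1 E2].
  assert (p < D) as HpD.
  { eapply le_lt_trans; [|exact L2]. eapply le_trans; [|eapply mod_le; exact H2].
    rewrite E2. apply le_add_l'. }
  assert (dvd (p + p) D) as DD by (apply pow2_lt_dvd2; auto).
  exists (n + D). split.
  - exists D. split; auto. split.
    + exists (n + 1). split. apply mod_small; auto.
      replace (succ A (n + D)) with (n + 1 + D) by (unfold succ; ring). apply mod_addm. apply dvd_refl. apply mod_small; auto.
    + exists (n + 1), (n + 1 + D). split; [|split].
      * apply mod_small. apply lt_trans with D; auto. apply lt_double; auto.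
      * replace (succ A (n + D)) with (n + 1 + D) by (unfold succ; ring). apply mod_small. apply lt_add_r; auto.
      * rewrite <- (a_add0 (n + 1)) at 1. rewrite (addC (n + 1) 0), (addC (n + 1) D). apply lt_add_r; auto.
  - assert (dvd p D) as DpD by (eapply dvd_trans; [apply dvd_double | exact DD]).
    exists p. split; auto. split.
    + eapply cong_trans; [|exact Hc]. exists s. split; auto.
      replace (succ A (n + D)) with (n + 1 + D) by (unfold succ; ring). apply mod_addm; auto.
    + exists r1, r2. split; [|split; auto].
      replace (succ A (n + D)) with (n + 1 + D) by (unfold succ; ring). apply mod_addm; auto. Qed.

Lemma ltQ_10 : ltq 1 0.
Proof. exists 1. split. apply pow2_1. split. exists 0. split; apply mod1.
  exists 0, 1. split; [|split].
  - split. apply lt0S. exists 1. unfold succ; ring.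
  - split. apply ltS_r. exists 0. unfold succ; ring.
  - apply lt_01. Qed.

Lemma ltQ_asym : forall n m, ltq n m -> ~ ltq m n.
Proof. intros n m H1 H2. exact (ltQ_irr n (ltQ_trans _ _ _ H1 H2)). Qed.

Definition coprime (m n : N) := forall d, dvd d m -> dvd d n -> d = 1.

Lemma le_lt_or : forall x y, x <= y \/ y < x.
Proof. intros x y. destruct (trich x y) as [h|[h|h]]. left; left; auto. left; right; auto. right; auto. Qed.

Lemma mul_le_cancel : forall m a c, 0 < m -> m * c <= m * a -> c <= a.
Proof. intros m a c Hm H. destruct (le_lt_or c a) as [h|h]; auto. exfalso.
  apply (le_not_lt _ _ H). rewrite (mulC m c), (mulC m a). apply lt_mul_r; auto. Qed.

Lemma mul_cancel_l : forall m a b, 0 < m -> m * a = m * b -> a = b.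
Proof. intros m a b Hm H. apply (mul_cancel _ _ m Hm). rewrite (mulC a m), (mulC b m). auto. Qed.

Lemma dvd_add : forall d x y, dvd d x -> dvd d y -> dvd d (x + y).
Proof. intros d x y [e <-] [f <-]. exists (e + f). ring. Qed.
Lemma dvd_mulr : forall d x y, dvd d x -> dvd d (x * y).
Proof. intros d x y [e <-]. exists (e * y). ring. Qed.
Lemma dvd_mull : forall d x y, dvd d y -> dvd d (x * y).
Proof. intros d x y [e <-]. exists (e * x). ring. Qed.

Lemma dvd_sub : forall d x y, 0 < d -> dvd d x -> dvd d (x + y) -> dvd d y.
Proof. intros d x y Hd [e <-] [f Ef]. assert (e <= f) as Hle.
  { apply (mul_le_cancel d); auto. rewrite Ef. apply le_add_l. }
  apply le_iff in Hle. destruct Hle as [g <-]. exists g.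
  apply (add_cancel_l (d * e)). rewrite <- Ef. ring. Qed.

Lemma dvd_pos : forall d x, 0 < x -> dvd d x -> 0 < d.
Proof. intros d x Hx [e <-]. apply ne0_lt. intros ->. rewrite mul0l in Hx. exact (lt_irr _ Hx). Qed.

Lemma dvd_1 : forall d, dvd d 1 -> d = 1.
Proof. intros d [e E]. eapply mul_eq1; eauto. Qed.

Lemma lt_add_pos : forall a b, 0 < b -> a < a + b.
Proof. intros a b H. rewrite <- (a_add0 a) at 1. rewrite (addC a 0), (addC a b). apply lt_add_r; auto. Qed.

Lemma euclid_aux : forall s m n a c, m + n = s -> 0 < m -> coprime m n -> n * a = m * c -> dvd m a.
Proof. sind. intros s IH m n a c Es Hm Hco E.
  destruct (zero_or_succ n) as [->|[n0 En]].
  - assert (m = 1) as ->. { apply Hco. apply dvd_refl. exists 0. apply a_mul0. }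
    exists a. ring.
  - assert (Hn : 0 < n) by (rewrite En; apply lt0S). clear n0 En.
    destruct (le_lt_or m n) as [h|h].
    + apply le_iff in h. destruct h as [n' <-].
      assert (a <= c) as Hac.
      { apply (mul_le_cancel m); auto. rewrite <- E. replace ((m + n') * a) with (m * a + n' * a) by ring.
        apply le_add_l. }
      apply le_iff in Hac. destruct Hac as [c' <-].
      apply (IH (m + n') ) with (n := n') (c := c'); auto.
      * rewrite <- Es. replace (m + (m + n')) with ((m + n') + m) by ring. apply lt_add_pos; auto.
      * intros d H1 H2. apply Hco; auto. apply dvd_add; auto.
      * apply (add_cancel_l (m * a)). transitivity ((m + n') * a); [ring|]. rewrite E. ring.
    + apply lt_iff in h. destruct h as [m' Em]. remember (m' + 1) as m'' eqn:Em''.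
      assert (0 < m'') as Hm'' by (rewrite Em''; apply lt0S). clear m' Em''. rename m'' into m'.
      subst m.
      assert (c <= a) as Hca.
      { apply (mul_le_cancel n); auto. rewrite E. replace ((n + m') * c) with (n * c + m' * c) by ring.
        apply le_add_l. }
      apply le_iff in Hca. destruct Hca as [a' <-].
      assert (dvd n c) as [e <-].
      { apply (IH (n + m')) with (n := m') (c := a'); auto.
        * rewrite <- Es. replace (n + m' + n) with ((n + m') + n) by ring. apply lt_add_pos; auto.
        * intros d H1 H2. apply Hco; auto. apply dvd_add; auto.
        * apply (add_cancel_l (n * c)). transitivity ((n + m') * c); [ring|]. rewrite <- E. ring. }
      exists e.
      apply (mul_cancel_l n); auto. rewrite E. ring. Qed.

Lemma euclid : forall m n a, 0 < m -> coprime m n -> dvd m (n * a) -> dvd m a.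
Proof. intros m n a Hm Hco [c Ec]. eapply (euclid_aux (m + n) m n a c); eauto. Qed.

Definition md (b y : N) := 1 + (y + 1) * b.
Definition memc (a b M y : N) := y <= M /\ dvd (md b y) a.
Definition validb (b M : N) := 0 < b /\ forall e, 0 < e -> e <= M -> dvd e b.

Lemma valid_ex : forall M, exists b, validb b M.
Proof. mind.
  - exists 1. split. apply lt_01. intros e He Hle. exfalso. apply (le_not_lt _ _ Hle He).
  - intros M [b [Hb Hd]]. exists (b * (M + 1)). split.
    + rewrite <- (a_mul0 b). rewrite (mulC b 0), (mulC b (M + 1)). apply lt_mul_r; auto. apply lt0S.
    + intros e He Hle. destruct Hle as [Hle| ->].
      * apply lt_succ in Hle. apply dvd_mulr. apply Hd; auto.
      * apply dvd_mull. apply dvd_refl. Qed.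

Lemma md_pos : forall b y, 0 < md b y.
Proof. intros b y. unfold md. rewrite addC. apply lt0S. Qed.

Lemma coprime_sym : forall m n, coprime m n -> coprime n m.
Proof. intros m n H d H1 H2. apply H; auto. Qed.

Lemma md_coprime0 : forall b M y z, validb b M -> y < z -> z <= M -> coprime (md b y) (md b z).
Proof. intros b M y z [Hb Hv] Hyz HzM d Hdy Hdz.
  apply lt_iff in Hyz. destruct Hyz as [e <-].
  assert (Hd : 0 < d) by (eapply dvd_pos; [apply md_pos|exact Hdy]).
  assert (dvd d (b * (e + 1))) as H1.
  { apply (dvd_sub d (md b y)); auto. replace (md b y + b * (e + 1)) with (md b (y + (e + 1))); auto.
    unfold md. ring. }
  assert (coprime d b) as Hcop.
  { intros f Hf1 Hf2. apply dvd_1. apply (dvd_sub f ((y + 1) * b)).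
    - eapply dvd_pos; [exact Hb | exact Hf2].
    - apply dvd_mull; auto.
    - replace ((y + 1) * b + 1) with (md b y) by (unfold md; ring). exact (dvd_trans _ _ _ Hf1 Hdy). }
  apply Hcop. apply dvd_refl.
  apply dvd_trans with (e + 1). apply euclid with b; auto.
  apply Hv. apply lt0S. eapply le_trans; [|exact HzM]. apply le_add_l'. Qed.

Lemma md_coprime : forall b M y z, validb b M -> y <= M -> z <= M -> y <> z -> coprime (md b y) (md b z).
Proof. intros b M y z Hv Hy Hz Hne. destruct (trich y z) as [h|[h|h]].
  - eapply md_coprime0; eauto.
  - contradiction.
  - apply coprime_sym. eapply md_coprime0; eauto. Qed.

Lemma md_not_dvd1 : forall b y, 0 < b -> ~ dvd (md b y) 1.
Proof. intros b y Hb H. apply dvd_1 in H. unfold md in H.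
  assert ((y + 1) * b = 0) as E. { apply (add_cancel_l 1). rewrite H. ring. }
  apply mul_eq0 in E. destruct E as [E|E]. exact (a_S0 _ E). rewrite E in Hb. exact (lt_irr _ Hb). Qed.

Lemma code_ex : forall X K, exists a b M, forall y, memc a b M y <-> (y <= K /\ y ∈ X).
Proof. intros X K. destruct (valid_ex K) as [b Hb].
  assert (forall k, exists a, forall y, y <= K -> (dvd (md b y) a -> y < k /\ y ∈ X) /\
                                             (y < k /\ y ∈ X -> dvd (md b y) a)) as Hk.
  { mind.
    - exists 1. intros y Hy. split.
      + intro H. exfalso. exact (md_not_dvd1 b y (proj1 Hb) H).
      + intros [H _]. exfalso. exact (a_lt0 _ H).
    - intros k [a Ha]. destruct (classic (k ∈ X /\ k <= K)) as [[Hk1 Hk2]|Hk].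
      + exists (a * md b k). intros y Hy. split.
        * intro H. destruct (classic (y = k)) as [->|Hne].
          -- split; auto. apply ltS_r.
          -- assert (dvd (md b y) a) as H'.
             { apply euclid with (md b k). apply md_pos. eapply md_coprime; eauto.
               rewrite mulC; auto. }
             destruct (proj1 (Ha y Hy) H') as [H1 H2]. split; auto. apply ltS_l; auto.
        * intros [H1 H2]. apply lt_succ in H1. destruct H1 as [H1| ->].
          -- apply dvd_mulr. apply (proj2 (Ha y Hy)). auto.
          -- apply dvd_mull. apply dvd_refl.
      + exists a. intros y Hy. split.
        * intro H. destruct (proj1 (Ha y Hy) H) as [H1 H2]. split; auto. apply ltS_l; auto.
        * intros [H1 H2]. apply lt_succ in H1. destruct H1 as [H1| ->].
          -- apply (proj2 (Ha y Hy)). auto.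
          -- exfalso. apply Hk. auto. }
  destruct (Hk (K + 1)) as [a Ha]. exists a, b, K. intro y. split.
  - intros [Hy Hd]. destruct (proj1 (Ha y Hy) Hd). auto.
  - intros [Hy Hx]. split; auto. apply (proj2 (Ha y Hy)). split; auto. apply lt_succ; auto. Qed.

Definition pi (x y : N) := (x + y) * (x + y) + x.

Lemma sq_le : forall a b, a <= b -> a * a <= b * b.
Proof. intros a b H. apply le_trans with (b * a). apply le_mul_r; auto.
  apply le_iff in H. apply le_iff. destruct H as [d <-]. exists ((a + d) * d). ring. Qed.

Lemma pi_lt : forall x y, pi x y < (x + y + 1) * (x + y + 1).
Proof. intros x y. unfold pi. apply lt_iff. exists (y + (x + y)). ring. Qed.

Lemma pi_inj : forall x y x' y', pi x y = pi x' y' -> x = x' /\ y = y'.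
Proof.
  assert (forall x y x' y', pi x y = pi x' y' -> ~ x + y < x' + y') as K.
  { intros x y x' y' E H. apply lt_succ_le in H. apply sq_le in H.
    apply (lt_irr (pi x y)). eapply lt_le_trans. apply pi_lt. eapply le_trans. exact H.
    rewrite E. unfold pi. apply le_add_l. }
  intros x y x' y' E. assert (x + y = x' + y') as Es.
  { destruct (trich (x + y) (x' + y')) as [h|[h|h]]; auto.
    exfalso; exact (K _ _ _ _ E h). exfalso; exact (K _ _ _ _ (eq_sym E) h). }
  unfold pi in E. rewrite Es in E. apply add_cancel_l in E. subst x'. split; auto.
  apply add_cancel_l in Es. auto. Qed.

Lemma le_sq : forall s, s <= s * s.
Proof. intros s. destruct (zero_or_succ s) as [->|[k ->]]. rewrite a_mul0. apply le_refl.
  apply le_mul_pos. apply lt0S. Qed.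

Lemma pi_ge_l : forall x y, x <= pi x y.
Proof. intros x y. unfold pi. apply le_add_l'. Qed.
Lemma pi_ge_r : forall x y, y <= pi x y.
Proof. intros x y. unfold pi. eapply le_trans; [|apply le_add_l]. eapply le_trans; [|apply le_sq].
  apply le_add_l'. Qed.

Section Rec.
Variable P : sets A.
Definition Qr n v a b M := pi n (pi v (pi a (pi b M))) ∈ P.
Definition Chosen n v a b M := (Qr n v a b M /\ forall w, w < v -> ~ Qr n w a b M) \/
                                 ((forall w, ~ Qr n w a b M) /\ v = 0).
Definition Good n a b M := (forall i, i < n -> exists w, memc a b M (pi i w) /\ Chosen i w a b M) /\
                           (forall i w, memc a b M (pi i w) -> i < n /\ Chosen i w a b M).
Definition agree n a b M a' b' M' := forall j u, j < n -> (memc a b M (pi j u) <-> memc a' b' M' (pi j u)).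
Hypothesis ExtH : forall n v a b M a' b' M', agree n a b M a' b' M' -> Qr n v a b M -> Qr n v a' b' M'.

Lemma agree_sym : forall n a b M a' b' M', agree n a b M a' b' M' -> agree n a' b' M' a b M.
Proof. intros n a b M a' b' M' H j u Hj. split; apply H; auto. Qed.

Lemma chosen_ext : forall n v a b M a' b' M', agree n a b M a' b' M' -> Chosen n v a b M -> Chosen n v a' b' M'.
Proof. intros n v a b M a' b' M' Hag [[H1 H2]|[H1 H2]].
  - left. split. eapply ExtH; eauto. intros w Hw C. apply (H2 w Hw). eapply ExtH; eauto. apply agree_sym; auto.
  - right. split; auto. intros w C. apply (H1 w). eapply ExtH; eauto. apply agree_sym; auto. Qed.

Lemma chosen_uniq : forall n v v' a b M, Chosen n v a b M -> Chosen n v' a b M -> v = v'.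
Proof. intros n v v' a b M [[H1 H2]|[H1 H2]] [[G1 G2]|[G1 G2]].
  - destruct (trich v v') as [h|[h|h]]; auto. exfalso; exact (G2 v h H1). exfalso; exact (H2 v' h G1).
  - exfalso; exact (G1 v H1).
  - exfalso; exact (H1 v' G1).
  - subst; auto. Qed.

Lemma chosen_ex : forall n a b M, exists v, Chosen n v a b M.
Proof. intros n a b M. destruct (classic (exists w, Qr n w a b M)) as [Hex|Hno].
  - least (fun w => Qr n w a b M) Hex as [v [Hv Hmin]]. exists v. left. auto.
  - exists 0. right. split; auto. intros w Hw. apply Hno. exists w; auto. Qed.

Lemma good_agree : forall i n a b M n' a' b' M', Good n a b M -> Good n' a' b' M' ->
  i < n -> i < n' -> forall w, (memc a b M (pi i w) -> memc a' b' M' (pi i w)) /\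
                              (memc a' b' M' (pi i w) -> memc a b M (pi i w)).
Proof. sind. intros i IH n a b M n' a' b' M' HG HG' Hi Hi' w.
  pose proof HG as [G1 G2]. pose proof HG' as [G1' G2'].
  assert (agree i a b M a' b' M') as Hag.
  { intros j u Hj. split; apply (IH j Hj n a b M n' a' b' M'); auto; eapply lt_trans; eauto. }
  destruct (G1 i Hi) as [w0 [Hm0 Hc0]]. destruct (G1' i Hi') as [w1 [Hm1 Hc1]].
  assert (w0 = w1) as <-. { eapply chosen_uniq; [|exact Hc1]. eapply chosen_ext; eauto. }
  split.
  - intro H. destruct (G2 i w H) as [_ Hc]. rewrite (chosen_uniq _ _ _ _ _ _ Hc Hc0). auto.
  - intro H. destruct (G2' i w H) as [_ Hc]. rewrite (chosen_uniq _ _ _ _ _ _ Hc Hc1). auto. Qed.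

Lemma agree_mono : forall n i a b M a' b' M', agree n a b M a' b' M' -> i <= n -> agree i a b M a' b' M'.
Proof. intros n i a b M a' b' M' H Hi j u Hj. apply H. eapply lt_le_trans; eauto. Qed.

Lemma good_ex : forall n, exists a b M, Good n a b M.
Proof. mind.
  - assert (exists E, forall y, y ∈ E <-> y <> y) as [E HE] by compr.
    destruct (code_ex E 0) as [a [b [M Hc]]]. exists a, b, M. split.
    + intros i Hi. exfalso. exact (a_lt0 _ Hi).
    + intros i w Hm. apply Hc in Hm. destruct Hm as [_ Hm]. apply HE in Hm. exfalso; auto.
  - intros n [a [b [M [G1 G2]]]]. destruct (chosen_ex n a b M) as [v Hv].
    assert (exists X, forall y, y ∈ X <-> (memc a b M y \/ y = pi n v)) as [X HX] by compr.
    destruct (code_ex X (M + pi n v)) as [a' [b' [M' Hc]]].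
    assert (agree n a b M a' b' M') as Hag.
    { intros j u Hj. split.
      - intro H. apply Hc. split. eapply le_trans; [apply H|apply le_add_l]. apply HX; auto.
      - intro H. apply Hc in H. destruct H as [_ H]. apply HX in H. destruct H as [H|H]; auto.
        apply pi_inj in H. destruct H as [-> _]. exfalso; exact (lt_irr _ Hj). }
    exists a', b', M'. split.
    + intros i Hi. apply lt_succ in Hi. destruct Hi as [Hi| ->].
      * destruct (G1 i Hi) as [w [Hm Hch]]. exists w. split.
        -- apply (Hag i w Hi). auto.
        -- eapply chosen_ext; [|exact Hch]. eapply agree_mono; eauto. left; auto.
      * exists v. split.
        -- apply Hc. split. apply le_add_l'. apply HX. right; auto.
        -- eapply chosen_ext; eauto.
    + intros i w Hm. apply Hc in Hm. destruct Hm as [_ Hm]. apply HX in Hm. destruct Hm as [Hm|Hm].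
      * destruct (G2 i w Hm) as [Hi Hch]. split. apply ltS_l; auto.
        eapply chosen_ext; [|exact Hch]. eapply agree_mono; eauto. left; auto.
      * apply pi_inj in Hm. destruct Hm as [-> ->]. split. apply ltS_r. eapply chosen_ext; eauto. Qed.

Definition agreeS n a b M (S : sets A) := forall j u, j < n -> (memc a b M (pi j u) <-> pi j u ∈ S).

Lemma rec_thm : exists S, (forall i w w', pi i w ∈ S -> pi i w' ∈ S -> w = w') /\
  forall n, exists a b M, agreeS n a b M S /\ forall v, pi n v ∈ S <-> Chosen n v a b M.
Proof.
  assert (exists S, forall t, t ∈ S <-> exists i w m a b M, t = pi i w /\ i < m /\ Good m a b M /\ memc a b M (pi i w))
    as [S HS] by compr.
  assert (forall i w, pi i w ∈ S <-> exists m a b M, i < m /\ Good m a b M /\ memc a b M (pi i w)) as HS'.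
  { intros i w. rewrite HS. split.
    - intros [i' [w' [m [a [b [M [E H]]]]]]]. apply pi_inj in E. destruct E as [-> ->]. eauto 10.
    - intros [m [a [b [M H]]]]. exists i, w, m, a, b, M. auto. }
  exists S. split.
  - intros i w w' H1 H2. apply HS' in H1. apply HS' in H2.
    destruct H1 as [m [a [b [M [Hi [HG Hm]]]]]]. destruct H2 as [m' [a' [b' [M' [Hi' [HG' Hm']]]]]].
    assert (memc a b M (pi i w')) as Hm2 by (apply (good_agree i m' a' b' M' m a b M); auto).
    pose proof HG as [_ G2]. destruct (G2 i w Hm) as [_ C1]. destruct (G2 i w' Hm2) as [_ C2].
    eapply chosen_uniq; eauto.
  - intro n. destruct (good_ex (n + 1)) as [a [b [M HG]]]. exists a, b, M. pose proof HG as [G1 G2]. split.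
    + intros j u Hj. split.
      * intro H. apply HS'. exists (n + 1), a, b, M. split; auto. apply ltS_l; auto.
      * intro H. apply HS' in H. destruct H as [m [a' [b' [M' [Hi [HG' Hm]]]]]].
        apply (good_agree j m a' b' M' (n + 1) a b M); auto. apply ltS_l; auto.
    + intro v. split.
      * intro H. apply HS' in H. destruct H as [m [a' [b' [M' [Hi [HG' Hm]]]]]].
        assert (memc a b M (pi n v)) as Hm2 by (apply (good_agree n m a' b' M' (n + 1) a b M); auto; apply ltS_r).
        apply (G2 n v Hm2).
      * intro Hc. destruct (G1 n (ltS_r n)) as [w [Hm Hc']].
        rewrite (chosen_uniq _ _ _ _ _ _ Hc Hc'). apply HS'. exists (n + 1), a, b, M. split; auto. apply ltS_r. Qed.
End Rec.

Definition Rc a b M := fun j u => memc a b M (pi j u).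
Definition Ag (R R' : N -> N -> Prop) n := forall j u, j < n -> (R j u <-> R' j u).
Definition ChosenR (th : (N -> N -> Prop) -> N -> N -> Prop) R n v :=
  (th R n v /\ forall w, w < v -> ~ th R n w) \/ ((forall w, ~ th R n w) /\ v = 0).

Lemma Qr_of (th : (N -> N -> Prop) -> N -> N -> Prop) (P : sets A) :
  (forall t, t ∈ P <-> exists n v a b M, t = pi n (pi v (pi a (pi b M))) /\ th (Rc a b M) n v) ->
  forall n v a b M, Qr P n v a b M <-> th (Rc a b M) n v.
Proof. intros HP n v a b M. unfold Qr. rewrite HP. split.
  - intros [n' [v' [a' [b' [M' [E H]]]]]].
    apply pi_inj in E; destruct E as [-> E]. apply pi_inj in E; destruct E as [-> E].
    apply pi_inj in E; destruct E as [-> E]. apply pi_inj in E; destruct E as [-> ->]. auto.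
  - intro H. exists n, v, a, b, M. auto. Qed.

Lemma rec_gen (th : (N -> N -> Prop) -> N -> N -> Prop) (P : sets A) :
  (forall R R' n v, Ag R R' n -> th R n v -> th R' n v) ->
  (forall n v a b M, Qr P n v a b M <-> th (Rc a b M) n v) ->
  exists S, (forall i w w', pi i w ∈ S -> pi i w' ∈ S -> w = w') /\ (forall n, exists v, pi n v ∈ S) /\
    forall n v, pi n v ∈ S <-> ChosenR th (fun j u => pi j u ∈ S) n v.
Proof. intros Hext HQ.
  assert (Hagsym : forall R R' n, Ag R R' n -> Ag R' R n).
  { intros R R' n H j u Hj. split; apply H; auto. }
  assert (Hch : forall R R' n v, Ag R R' n -> ChosenR th R n v -> ChosenR th R' n v).
  { intros R R' n v Hag [[H1 H2]|[H1 H2]].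
    - left. split. eapply Hext; eauto. intros w Hw C. apply (H2 w Hw). eapply Hext; eauto.
    - right. split; auto. intros w C. apply (H1 w). eapply Hext; eauto. }
  assert (ExtH : forall n v a b M a' b' M', agree n a b M a' b' M' -> Qr P n v a b M -> Qr P n v a' b' M').
  { intros n v a b M a' b' M' Hag H. apply HQ. apply HQ in H. eapply Hext; [|exact H]. exact Hag. }
  assert (Hc2 : forall n v a b M, Chosen P n v a b M <-> ChosenR th (Rc a b M) n v).
  { intros n v a b M. unfold Chosen, ChosenR. split; (intros [[H1 H2]|[H1 H2]]; [left|right]);
      (split; [ try (apply HQ; exact H1); try (intros w; rewrite <- HQ; apply H1); auto
              | try (intros w Hw; rewrite <- HQ; apply H2; auto); try (intros w Hw; rewrite HQ; apply H2; auto); auto]).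
    intros w; rewrite HQ; apply H1. }
  destruct (rec_thm P ExtH) as [S [HU HS]]. exists S. split; auto. split.
  - intro n. destruct (HS n) as [a [b [M [Hag Hv]]]]. destruct (chosen_ex P n a b M) as [v Hv'].
    exists v. apply Hv. auto.
  - intros n v. destruct (HS n) as [a [b [M [Hag Hv]]]]. rewrite Hv, Hc2. split; apply Hch.
    + intros j u Hj. apply Hag; auto.
    + intros j u Hj. symmetry. apply Hag; auto. Qed.

Section Comb.
Variable F : sets A.

Definition inI a b z := ltq a z /\ ltq z b.
Definition denseP (Y : N -> Prop) a b :=
  forall u v, inI a b u -> inI a b v -> ltq u v -> exists z, Y z /\ ltq u z /\ ltq z v.
Definition col1 x y := color1 A F x y.
Definition N0 y z := z <> y /\ ~ col1 y z.

Lemma col1_sym : forall x y, col1 x y -> col1 y x.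
Proof. intros x y [H|H]; [right|left]; auto. Qed.

Lemma inI_sub : forall a b a' b' z, inI a b a' -> inI a b b' -> inI a' b' z -> inI a b z.
Proof. intros a b a' b' z [H1 H2] [H3 H4] [H5 H6]. split. exact (ltQ_trans _ _ _ H1 H5). exact (ltQ_trans _ _ _ H6 H4). Qed.

Lemma denseP_mono : forall (Y Y' : N -> Prop) a b, (forall z, Y z -> Y' z) -> denseP Y a b -> denseP Y' a b.
Proof. intros Y Y' a b H D u v Hu Hv Huv. destruct (D u v Hu Hv Huv) as [z [Hz [H1 H2]]]. exists z; auto. Qed.

Lemma denseP_sub : forall Y a b a' b', inI a b a' -> inI a b b' -> denseP Y a b -> denseP Y a' b'.
Proof. intros Y a b a' b' H1 H2 D u v Hu Hv Huv. apply D;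
  [exact (inI_sub _ _ _ _ _ H1 H2 Hu) | exact (inI_sub _ _ _ _ _ H1 H2 Hv) | exact Huv]. Qed.

Lemma dense_in : forall Y a b u v, denseP Y a b -> inI a b u -> inI a b v -> ltq u v ->
  exists z, Y z /\ inI a b z /\ inI u v z.
Proof. intros Y a b u v D Hu Hv Huv. destruct (D u v Hu Hv Huv) as [z [Hz [H1 H2]]].
  exists z. split; auto. split. split. exact (ltQ_trans _ _ _ (proj1 Hu) H1). exact (ltQ_trans _ _ _ H2 (proj2 Hv)).
  split; auto. Qed.

Lemma two_points : forall a b, ltq a b -> exists u v, inI a b u /\ inI a b v /\ ltq u v.
Proof. intros a b H. destruct (ltQ_dense a b H) as [t1 [H1 H2]].
  destruct (ltQ_dense t1 b H2) as [t2 [H3 H4]]. exists t1, t2. split. split; auto.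
  split. split; auto. eapply ltQ_trans; eauto. auto. Qed.

Lemma nonempty : forall Y a b, ltq a b -> denseP Y a b -> exists z, Y z /\ inI a b z.
Proof. intros Y a b H D. destruct (two_points a b H) as [u [v [Hu [Hv Huv]]]].
  destruct (dense_in Y a b u v D Hu Hv Huv) as [z [Hz [H1 _]]]. eauto. Qed.

Lemma Qdense : forall a b, denseP (fun _ => True) a b.
Proof. intros a b u v _ _ Huv. destruct (ltQ_dense u v Huv) as [z [H1 H2]]. eauto. Qed.

Lemma qmin : forall (B : sets A) k, (exists z, z ∈ B /\ z <= k) ->
  exists w, w ∈ B /\ w <= k /\ forall z, z ∈ B -> z <= k -> ~ ltq z w.
Proof. intros B. mind.
  - intros [z [Hz Hz0]]. assert (z = 0) as ->. { destruct Hz0 as [h|h]; auto. exfalso; exact (a_lt0 _ h). }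
    exists 0. split; auto. split. apply le_refl. intros z Hz' Hle.
    assert (z = 0) as ->. { destruct Hle as [h|h]; auto. exfalso; exact (a_lt0 _ h). } apply ltQ_irr.
  - intros k IH [z [Hz Hle]]. destruct (classic (exists z, z ∈ B /\ z <= k)) as [Hex|Hno].
    + destruct (IH Hex) as [w [Hw [Hwk Hmin]]].
      destruct (classic ((k + 1) ∈ B /\ ltq (k + 1) w)) as [[Hk1 Hk2]|Hk].
      * exists (k + 1). split; auto. split. apply le_refl. intros z' Hz' Hle'.
        destruct Hle' as [h| ->]. apply lt_succ in h.
        intro C. apply (Hmin z' Hz' h). eapply ltQ_trans; eauto. apply ltQ_irr.
      * exists w. split; auto. split. apply le_trans with k; auto. left; apply ltS_r.
        intros z' Hz' Hle'. destruct Hle' as [h| ->]. apply lt_succ in h. apply Hmin; auto.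
        intro C. apply Hk; auto.
    + exists z. split; auto. assert (z = k + 1) as ->.
      { destruct Hle as [h|h]; auto. apply lt_succ in h. exfalso. apply Hno. eauto. }
      split. apply le_refl. intros z' Hz' Hle'. destruct Hle' as [h| ->].
      apply lt_succ in h. exfalso. apply Hno. eauto. apply ltQ_irr. Qed.

Lemma unbounded : forall (Y : sets A) u v, ltq u v -> denseP (fun z => z ∈ Y) u v ->
  forall k, exists z, z ∈ Y /\ inI u v z /\ k < z.
Proof. intros Y u v Huv D k. apply NNPP. intro Hno.
  assert (Hb : forall z, z ∈ Y -> inI u v z -> z <= k).
  { intros z Hz Hi. apply not_lt_le. intro C. apply Hno. eauto. }
  destruct (nonempty _ u v Huv D) as [z1 [Hz1 Hi1]].
  assert (exists B, forall z, z ∈ B <-> (z ∈ Y /\ inI u v z /\ ltq z1 z)) as [B HB] by compr.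
  assert (exists z, z ∈ B /\ z <= k) as Hex.
  { destruct Hi1 as [Hi1a Hi1b]. destruct (ltQ_dense z1 v Hi1b) as [t [Ht1 Ht2]].
    assert (inI u v t) as Hit by (split; auto; eapply ltQ_trans; eauto).
    destruct (dense_in _ u v z1 t D (conj Hi1a Hi1b) Hit Ht1) as [z [Hz [Hiz [Hz1z Hzt]]]].
    exists z. split. apply HB. auto. apply Hb; auto. }
  destruct (qmin B k Hex) as [w [Hw [Hwk Hmin]]]. apply HB in Hw. destruct Hw as [HwY [Hwi Hw1]].
  destruct (dense_in _ u v z1 w D Hi1 Hwi Hw1) as [z [Hz [Hiz [Hz1z Hzw]]]].
  apply (Hmin z). - apply HB. auto. - apply Hb; auto. - exact Hzw. Qed.

Definition CurI (R : N -> N -> Prop) n an bn :=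
  (n = 0 /\ an = 1 /\ bn = 0) \/ (exists j u y, n = j + 1 /\ R j u /\ u = pi y (pi an bn)).
Definition Yn (R : N -> N -> Prop) n z :=
  (exists an bn, CurI R n an bn /\ inI an bn z) /\
  forall j u y' a2 b2, j < n -> R j u -> u = pi y' (pi a2 b2) -> N0 y' z.
Definition Cond (R : N -> N -> Prop) n y a' b' :=
  Yn R n y /\ (exists an bn, CurI R n an bn /\ inI an bn a' /\ inI an bn b') /\ ltq a' b' /\
  denseP (fun z => Yn R n z /\ N0 y z) a' b'.
Definition th1 (R : N -> N -> Prop) n v :=
  exists y a' b', v = pi y (pi a' b') /\ Cond R n y a' b' /\
    forall y2, y2 < y -> forall a2 b2, ~ Cond R n y2 a2 b2.

Lemma Ag_sym : forall R R' n, Ag R R' n -> Ag R' R n.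
Proof. intros R R' n H j u Hj. split; apply H; auto. Qed.

Lemma CurI_ext : forall R R' n an bn, Ag R R' n -> CurI R n an bn -> CurI R' n an bn.
Proof. intros R R' n an bn Hag [H|[j [u [y [E [HR Eu]]]]]]. left; auto.
  right. exists j, u, y. split; auto. split; auto. apply Hag; auto. rewrite E. apply ltS_r. Qed.

Lemma Yn_ext : forall R R' n z, Ag R R' n -> Yn R n z -> Yn R' n z.
Proof. intros R R' n z Hag [[an [bn [Hc Hi]]] H2]. split.
  - exists an, bn. split; auto. eapply CurI_ext; eauto.
  - intros j u y' a2 b2 Hj HR Eu. eapply H2; eauto. apply Hag; auto. Qed.

Lemma Cond_ext : forall R R' n y a' b', Ag R R' n -> Cond R n y a' b' -> Cond R' n y a' b'.
Proof. intros R R' n y a' b' Hag [H1 [[an [bn [Hc [Ha Hb]]]] [H3 H4]]]. split; [|split; [|split]].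
  - eapply Yn_ext; eauto.
  - exists an, bn. split; auto. eapply CurI_ext; eauto.
  - auto.
  - eapply denseP_mono; [|exact H4]. intros z [Hz1 Hz2]. split; auto. eapply Yn_ext; eauto. Qed.

Lemma th1_ext : forall R R' n v, Ag R R' n -> th1 R n v -> th1 R' n v.
Proof. intros R R' n v Hag [y [a' [b' [E [Hc Hm]]]]]. exists y, a', b'. split; auto. split.
  eapply Cond_ext; eauto. intros y2 Hy2 a2 b2 C. apply (Hm y2 Hy2 a2 b2). eapply Cond_ext; eauto.
  apply Ag_sym; auto. Qed.

Lemma CurI_uniq : forall (S : sets A), (forall i w w', pi i w ∈ S -> pi i w' ∈ S -> w = w') ->
  forall n an bn an' bn', CurI (fun j u => pi j u ∈ S) n an bn -> CurI (fun j u => pi j u ∈ S) n an' bn' ->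
  an = an' /\ bn = bn'.
Proof. intros S HU n an bn an' bn' [[E1 [-> ->]]|[j [u [y [E1 [H1 ->]]]]]] [[E2 [-> ->]]|[j' [u' [y' [E2 [H2 ->]]]]]].
  - auto.
  - exfalso. rewrite E1 in E2. exact (a_S0 _ (eq_sym E2)).
  - exfalso. rewrite E1 in E2. exact (a_S0 _ E2).
  - rewrite E1 in E2. apply a_Sinj in E2. subst j'. pose proof (HU _ _ _ H1 H2) as E.
    apply pi_inj in E. destruct E as [_ E]. apply pi_inj in E. auto. Qed.

Definition GoodPair a b (Y : sets A) :=
  ltq a b /\ denseP (fun z => z ∈ Y) a b /\
  forall y, y ∈ Y -> inI a b y -> forall a' b', inI a b a' -> inI a b b' -> ltq a' b' ->
    ~ denseP (fun z => z ∈ Y /\ N0 y z) a' b'.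

Theorem step1 : ~ (exists H, infinite_set A H /\ homogeneous A F H false) ->
  exists a b Y, GoodPair a b Y.
Proof. intros NoH. apply NNPP. intro Hno.
  assert (Hyp : forall a b (Y : sets A), ltq a b -> denseP (fun z => z ∈ Y) a b ->
    exists y a' b', y ∈ Y /\ inI a b a' /\ inI a b b' /\ ltq a' b' /\ denseP (fun z => z ∈ Y /\ N0 y z) a' b').
  { intros a b Y Hab HD. apply NNPP. intro C. apply Hno. exists a, b, Y. split; auto. split; auto.
    intros y Hy Hiy a' b' Ha' Hb' Hab' HD'. apply C. exists y, a', b'. auto. }
  assert (exists P, forall t, t ∈ P <-> exists n v a b M, t = pi n (pi v (pi a (pi b M))) /\ th1 (Rc a b M) n v)
    as [P HP] by compr.
  destruct (rec_gen th1 P th1_ext (Qr_of th1 P HP)) as [S [HU [HE HC]]].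
  set (Rs := fun j u => pi j u ∈ S).
  assert (Hst : forall n an bn, CurI Rs n an bn -> ltq an bn -> denseP (Yn Rs n) an bn ->
    exists y a' b', pi n (pi y (pi a' b')) ∈ S /\ Cond Rs n y a' b' /\
      forall y2, y2 < y -> forall a2 b2, ~ Cond Rs n y2 a2 b2).
  { intros n an bn Hc Hab HD.
    assert (exists Ys, forall z, z ∈ Ys <-> Yn Rs n z) as [Ys HYs] by (unfold Rs; compr).
    destruct (Hyp an bn Ys Hab) as [y [a' [b' [Hy [Ha' [Hb' [Hab' HD']]]]]]].
    { eapply denseP_mono; [|exact HD]. intros z Hz. apply HYs; auto. }
    assert (exists y, exists a' b', Cond Rs n y a' b') as Hex.
    { exists y, a', b'. split; [apply HYs; auto|split; [|split]]; auto.
      - exists an, bn. auto.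
      - eapply denseP_mono; [|exact HD']. intros z [Hz1 Hz2]. split; auto. apply HYs; auto. }
    least (fun y => exists a' b', Cond Rs n y a' b') Hex as [y0 [[a0 [b0 Hc0]] Hmin]].
    destruct (HE n) as [v Hv]. pose proof (proj1 (HC n v) Hv) as Hv'. destruct Hv' as [[Hth _]|[Hno2 _]].
    - destruct Hth as [y1 [a1 [b1 [-> [Hc1 Hm1]]]]]. exists y1, a1, b1. split; [|split]; auto.
    - exfalso. apply (Hno2 (pi y0 (pi a0 b0))). exists y0, a0, b0. split; auto. split; auto.
      intros y2 Hy2 a2 b2 C. apply (Hmin y2 Hy2). eauto. }
  assert (Hinv : forall n, exists an bn, CurI Rs n an bn /\ ltq an bn /\ denseP (Yn Rs n) an bn).
  { unfold Rs. mind.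
    - exists 1, 0. split. left; auto. split. apply ltQ_10.
      intros u v Hu Hv Huv. destruct (ltQ_dense u v Huv) as [z [H1 H2]]. exists z. split; auto.
      split.
      + exists 1, 0. split. left; auto. split. exact (ltQ_trans _ _ _ (proj1 Hu) H1). exact (ltQ_trans _ _ _ H2 (proj2 Hv)).
      + intros j u' y' a2 b2 Hj. exfalso; exact (a_lt0 _ Hj).
    - intros n [an [bn [Hc [Hab HD]]]].
      destruct (Hst n an bn Hc Hab HD) as [y [a' [b' [HS [[HYy [_ [Hab' HD']]] _]]]]].
      exists a', b'. split; [|split]; auto.
      + right. exists n, (pi y (pi a' b')), y. auto.
      + intros u v Hu Hv Huv. destruct (dense_in _ a' b' u v HD' Hu Hv Huv) as [z [[Hz1 Hz2] [Hz3 Hz4]]].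
        exists z. split; [|exact Hz4]. split.
        * exists a', b'. split; auto. right. exists n, (pi y (pi a' b')), y. auto.
        * intros j u' y' a2 b2 Hj HR Eu. apply lt_succ in Hj. destruct Hj as [Hj| ->].
          -- destruct Hz1 as [_ Hz1]. eapply Hz1; eauto.
          -- pose proof (HU _ _ _ HR HS) as E. rewrite Eu in E. apply pi_inj in E. destruct E as [-> _]. auto. }
  assert (Hstage : forall n, exists y a' b', pi n (pi y (pi a' b')) ∈ S /\ Cond Rs n y a' b' /\
      forall y2, y2 < y -> forall a2 b2, ~ Cond Rs n y2 a2 b2).
  { intro n. destruct (Hinv n) as [an [bn [Hc [Hab HD]]]]. eapply Hst; eauto. }
  assert (Hcur1 : forall n y a' b', pi n (pi y (pi a' b')) ∈ S -> CurI Rs (n + 1) a' b').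
  { intros n y a' b' H. right. exists n, (pi y (pi a' b')), y. auto. }
  assert (Hdown : forall n y a' b' z a2 b2, pi n (pi y (pi a' b')) ∈ S -> Cond Rs n y a' b' ->
            Cond Rs (n + 1) z a2 b2 -> Cond Rs n z a2 b2).
  { intros n y a' b' z a2 b2 HS [_ [[an [bn [Hc [Ha' Hb']]]] _]] Hc2.
    assert (Yd : forall w, Yn Rs (n + 1) w -> Yn Rs n w).
    { intros w [[cn [dn [Hc' Hi]]] H2]. split.
      - exists an, bn. split; auto. destruct (CurI_uniq S HU _ _ _ _ _ (Hcur1 _ _ _ _ HS) Hc') as [<- <-].
        eapply inI_sub; [exact Ha'|exact Hb'|exact Hi].
      - intros j u y' a3 b3 Hj. apply H2. apply ltS_l; auto. }
    destruct Hc2 as [H1 [[cn [dn [Hc' [Ha2 Hb2]]]] [H3 H4]]]. split; [|split; [|split]].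
    - apply Yd; auto.
    - exists an, bn. split; auto. destruct (CurI_uniq S HU _ _ _ _ _ (Hcur1 _ _ _ _ HS) Hc') as [<- <-].
      split; [exact (inI_sub _ _ _ _ _ Ha' Hb' Ha2) | exact (inI_sub _ _ _ _ _ Ha' Hb' Hb2)].
    - auto.
    - eapply denseP_mono; [|exact H4]. intros w [Hw1 Hw2]. split; auto. }
  assert (Hincr : forall n y a' b' z a2 b2, pi n (pi y (pi a' b')) ∈ S -> pi (n + 1) (pi z (pi a2 b2)) ∈ S -> y < z).
  { intros n y a' b' z a2 b2 H1 H2.
    destruct (Hstage n) as [y1 [a1 [b1 [G1 [C1 M1]]]]].
    pose proof (HU _ _ _ H1 G1) as E. apply pi_inj in E. destruct E as [<- E]. apply pi_inj in E. destruct E as [<- <-].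
    destruct (Hstage (n + 1)) as [z1 [c1 [d1 [G2 [C2 M2]]]]].
    pose proof (HU _ _ _ H2 G2) as E. apply pi_inj in E. destruct E as [<- E]. apply pi_inj in E. destruct E as [<- <-].
    assert (Cond Rs n z a2 b2) as Cz by (eapply Hdown; eauto).
    assert (y <= z) as Hle. { apply not_lt_le. intro C. exact (M1 z C a2 b2 Cz). }
    destruct Hle as [Hle| ->]; auto. exfalso.
    destruct C2 as [[_ HN] _]. destruct (HN n (pi z (pi a' b')) z a' b' (ltS_r n) H1 eq_refl) as [HN1 _].
    apply HN1. reflexivity. }
  assert (Hlow : forall n y a' b', pi n (pi y (pi a' b')) ∈ S -> n <= y).
  { mind.
    - intros. apply le0.
    - intros n IH z a2 b2 H2. destruct (Hstage n) as [y [a' [b' [G1 _]]]].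
      pose proof (IH y a' b' G1) as Hn. pose proof (Hincr _ _ _ _ _ _ _ G1 H2) as Hyz.
      apply lt_succ_le. eapply le_lt_trans; eauto. }
  assert (exists H, forall z, z ∈ H <-> exists n a' b', pi n (pi z (pi a' b')) ∈ S) as [H HH] by compr.
  apply NoH. exists H. split.
  - intro k. destruct (Hstage (k + 1)) as [y [a' [b' [G _]]]]. exists y. split.
    + apply HH. eauto.
    + apply lt_succ_le. eapply Hlow; eauto.
  - assert (Hhom : forall n m x y a1 b1 a2 b2, n < m -> pi n (pi x (pi a1 b1)) ∈ S -> pi m (pi y (pi a2 b2)) ∈ S ->
        ~ col1 x y).
    { intros n m x y a1 b1 a2 b2 Hnm G1 G2.
      destruct (Hstage m) as [z [c [d [G [[[_ HN] _] _]]]]].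
      pose proof (HU _ _ _ G2 G) as E. apply pi_inj in E. destruct E as [<- E]. apply pi_inj in E. destruct E as [<- <-].
      exact (proj2 (HN n (pi x (pi a1 b1)) x a1 b1 Hnm G1 eq_refl)). }
    intros x y Hx Hy Hxy. apply HH in Hx. apply HH in Hy.
    destruct Hx as [n [a1 [b1 G1]]]. destruct Hy as [m [a2 [b2 G2]]].
    destruct (trich n m) as [h|[<-|h]].
    + exact (Hhom _ _ _ _ _ _ _ _ h G1 G2).
    + exfalso. apply Hxy. pose proof (HU _ _ _ G1 G2) as E. apply pi_inj in E. apply E.
    + intro C. apply (Hhom _ _ _ _ _ _ _ _ h G2 G1). apply col1_sym. exact C.
Qed.

Section Step2.
Variables (a b : N) (Y : sets A).
Hypothesis GP : GoodPair a b Y.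

Definition E2 (R : N -> N -> Prop) n z :=
  z ∈ Y /\ inI a b z /\
  (forall i j ui uj, n = pi i j + 1 -> i < n -> j < n -> R i ui -> R j uj -> ltq ui uj -> inI ui uj z) /\
  (forall j u, j < n -> R j u -> z <> u /\ col1 u z).
Definition th2 (R : N -> N -> Prop) n v := E2 R n v /\ n < v.

Lemma th2_ext : forall R R' n v, Ag R R' n -> th2 R n v -> th2 R' n v.
Proof. intros R R' n v Hag [[H1 [H2 [H3 H4]]] H5]. split; auto. split; auto. split; auto. split.
  - intros i j ui uj E Hi Hj Ri Rj Hl. apply (H3 i j ui uj); auto.
    exact (proj2 (Hag i ui Hi) Ri). exact (proj2 (Hag j uj Hj) Rj).
  - intros j u Hj Ru. apply (H4 j u Hj). exact (proj2 (Hag j u Hj) Ru). Qed.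

Lemma denseP_subset : forall Y' u1 v1 u0 v0, (forall z, inI u1 v1 z -> inI u0 v0 z) ->
  denseP Y' u0 v0 -> denseP Y' u1 v1.
Proof. intros Y' u1 v1 u0 v0 Hs D u v Hu Hv Huv. apply D; auto. Qed.

Theorem step2 : exists H, homogeneous A F H true /\ denseQ A H.
Proof.
  destruct GP as [Hab [HD HN]].
  assert (exists P, forall t, t ∈ P <-> exists n v a b M, t = pi n (pi v (pi a (pi b M))) /\ th2 (Rc a b M) n v)
    as [P HP] by compr.
  destruct (rec_gen th2 P th2_ext (Qr_of th2 P HP)) as [S [HU [HE HC]]].
  set (Rs := fun j u => pi j u ∈ S).
  assert (Hall : forall n v, pi n v ∈ S -> th2 Rs n v).
  { unfold Rs. sind. intros n IH v Hv.
    assert (Hex : exists w, th2 (fun j u => pi j u ∈ S) n w).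
    { assert (Hint : exists u0 v0, ltq u0 v0 /\ (forall z, inI u0 v0 z -> inI a b z) /\
         (forall i j ui uj, n = pi i j + 1 -> i < n -> j < n -> pi i ui ∈ S -> pi j uj ∈ S -> ltq ui uj ->
            forall z, inI u0 v0 z -> inI ui uj z)).
      { destruct (classic (exists i j ui uj, n = pi i j + 1 /\ i < n /\ j < n /\ pi i ui ∈ S /\ pi j uj ∈ S /\ ltq ui uj))
          as [[i0 [j0 [ui0 [uj0 [E0 [Hi0 [Hj0 [Hui0 [Huj0 Hl0]]]]]]]]]|Hnp].
        - exists ui0, uj0. split; auto. split.
          + intros z [Hz1 Hz2]. destruct (IH i0 Hi0 ui0 Hui0) as [[_ [[Ha1 _] _]] _].
            destruct (IH j0 Hj0 uj0 Huj0) as [[_ [[_ Hb1] _]] _].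
            split; eapply ltQ_trans; eauto.
          + intros i j ui uj E Hi Hj Hui Huj Hl z Hz. rewrite E0 in E. apply a_Sinj in E.
            apply pi_inj in E. destruct E as [<- <-].
            rewrite (HU _ _ _ Hui Hui0), (HU _ _ _ Huj Huj0). auto.
        - exists a, b. split; auto. split; auto.
          intros i j ui uj E Hi Hj Hui Huj Hl. exfalso. apply Hnp. exists i, j, ui, uj. tauto. }
      destruct Hint as [u0 [v0 [Huv0 [Hsub0 Hpair]]]].
      assert (Hav : forall m, m <= n -> exists u1 v1, ltq u1 v1 /\ (forall z, inI u1 v1 z -> inI u0 v0 z) /\
          forall k hk z, k < m -> pi k hk ∈ S -> inI u1 v1 z -> z <> hk /\ ~ (z ∈ Y /\ N0 hk z)).
      { mind.
        - intros _. exists u0, v0. split; auto. split; auto. intros k hk z Hk. exfalso; exact (a_lt0 _ Hk).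
        - intros m IHm Hle. assert (Hm : m < n) by (apply lt_succ_le; auto).
          destruct (IHm (lt_le _ _ Hm)) as [u1 [v1 [Huv1 [Hs1 Hav1]]]].
          destruct (HE m) as [hm Hhm]. destruct (IH m Hm hm Hhm) as [[HhY [Hhab _]] _].
          assert (exists u2 v2, ltq u2 v2 /\ (forall z, inI u2 v2 z -> inI u1 v1 z) /\ forall z, inI u2 v2 z -> z <> hm)
            as [u2 [v2 [Huv2 [Hs2 Hne2]]]].
          { destruct (classic (inI u1 v1 hm)) as [Hin|Hout].
            - exists u1, hm. split. apply Hin. split.
              + intros z [Hz1 Hz2]. split; auto. eapply ltQ_trans; eauto. apply Hin.
              + intros z [Hz1 Hz2] ->. exact (ltQ_irr _ Hz2).
            - exists u1, v1. split; auto. split; auto. intros z Hz ->. auto. }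
          destruct (two_points u2 v2 Huv2) as [t1 [t2 [Ht1 [Ht2 Ht12]]]].
          assert (Hab_t : forall z, inI u2 v2 z -> inI a b z) by (intros z Hz; apply Hsub0, Hs1, Hs2; auto).
          pose proof (HN hm HhY Hhab t1 t2 (Hab_t _ Ht1) (Hab_t _ Ht2) Ht12) as Hnd.
          assert (exists u4 v4, inI t1 t2 u4 /\ inI t1 t2 v4 /\ ltq u4 v4 /\
                   ~ exists z, (z ∈ Y /\ N0 hm z) /\ ltq u4 z /\ ltq z v4) as [u4 [v4 [Hu4 [Hv4 [Huv4 Hno4]]]]].
          { apply NNPP. intro C. apply Hnd. intros u5 v5 Hu Hv5 Huv. apply NNPP. intro C2. apply C.
            exists u5, v5. tauto. }
          assert (Hs4 : forall z, inI u4 v4 z -> inI u2 v2 z).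
          { intros z Hz. apply (inI_sub u2 v2 t1 t2); auto. apply (inI_sub t1 t2 u4 v4); auto. }
          exists u4, v4. split; auto. split.
          + intros z Hz. apply Hs1, Hs2, Hs4; auto.
          + intros k hk z Hk Hhk Hz. apply lt_succ in Hk. destruct Hk as [Hk| ->].
            * apply (Hav1 k hk z Hk Hhk). apply Hs2, Hs4; auto.
            * rewrite (HU _ _ _ Hhk Hhm). split. apply Hne2, Hs4; auto.
              intro C. apply Hno4. exists z. split; auto. }
      destruct (Hav n (le_refl n)) as [u1 [v1 [Huv1 [Hs1 Hav1]]]].
      assert (HD1 : denseP (fun z => z ∈ Y) u1 v1).
      { eapply denseP_subset; [|exact HD]. intros z Hz. apply Hsub0, Hs1; auto. }
      destruct (unbounded Y u1 v1 Huv1 HD1 n) as [z [HzY [Hz1 Hnz]]].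
      exists z. split; auto. split; auto. split. apply Hsub0, Hs1; auto. split.
      - intros i j ui uj E Hi Hj Hui Huj Hl. eapply Hpair; eauto.
      - intros j u Hj Hu. destruct (Hav1 j u z Hj Hu Hz1) as [Hne Hnn]. split; auto.
        apply NNPP. intro C. apply Hnn. split; auto. split; auto. }
    pose proof (proj1 (HC n v) Hv) as Hch. destruct Hch as [[H _]|[Hno _]]. exact H.
    exfalso. destruct Hex as [w Hw]. exact (Hno w Hw). }
  assert (exists H, forall z, z ∈ H <-> exists n, pi n z ∈ S) as [H HH] by compr.
  assert (Hhom : forall n m x y, n < m -> pi n x ∈ S -> pi m y ∈ S -> col1 x y).
  { intros n m x y Hnm Hx Hy. destruct (Hall m y Hy) as [[_ [_ [_ H4]]] _]. apply (H4 n x Hnm Hx). }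
  exists H. split.
  - intros x y Hx Hy Hxy. apply HH in Hx. apply HH in Hy. destruct Hx as [n Hx]. destruct Hy as [m Hy].
    destruct (trich n m) as [h|[<-|h]].
    + exact (Hhom _ _ _ _ h Hx Hy).
    + exfalso. apply Hxy. exact (HU _ _ _ Hx Hy).
    + apply col1_sym. exact (Hhom _ _ _ _ h Hy Hx).
  - split.
    + intro k. destruct (HE k) as [v Hv]. exists v. split. apply HH. eauto.
      exact (proj2 (Hall k v Hv)).
    + intros x y Hx Hy Hxy. apply HH in Hx. apply HH in Hy. destruct Hx as [i Hx]. destruct Hy as [j Hy].
      destruct (HE (pi i j + 1)) as [z Hz]. exists z. split. apply HH. eauto.
      destruct (Hall _ z Hz) as [[_ [_ [H3 _]]] _].
      apply (H3 i j x y eq_refl); auto.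
      * apply lt_succ. apply pi_ge_l.
      * apply lt_succ. apply pi_ge_r.
Qed.
End Step2.

Theorem er22_F : (exists H, infinite_set A H /\ homogeneous A F H false) \/
                 (exists H, homogeneous A F H true /\ denseQ A H).
Proof. destruct (classic (exists H, infinite_set A H /\ homogeneous A F H false)) as [L|R].
  - left; auto.
  - right. destruct (step1 R) as [a [b [Y G]]]. exact (step2 a b Y G). Qed.
End Comb.
End Dev.

Theorem mainTheorem3 : forall A : L2Structure, ACA0_model A -> ER22 A.
Proof. intros A HA F. exact (er22_F A HA F F). Qed.
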